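(* Let $0<\gamma<1$, $\Omega=(a,b)\times(c,d)$, and $u\in C^6([a,b]\times[c,d])$, and let $u_Q$ be its tensor-product piecewise quadratic interpolant (see context). Then there is a constant $C$, depending on $u,\gamma,a,b,c,d$ but not on $M_x,M_y,i,j$, such that for all $M_x,M_y\ge2$ and all $i\in\{1,\dots,2M_x-1\}$, $j\in\{1,\dots,2M_y-1\}$, $$\left|\int_c^d\!\!\int_a^b\frac{u(x,y)-u_Q(x,y)}{|x_{i/2}-x|^{\gamma}\,|y_{j/2}-y|^{\gamma}}\,dx\,dy\right|\le C\Big(h_x^4\eta_{i/2}^{-\gamma}+h_y^4\tilde\eta_{j/2}^{-\gamma}+h_x^{5-\gamma}+h_y^{5-\gamma}\Big),$$ where $\eta_{i/2}=\min\{x_{i/2}-a,\,b-x_{i/2}\}$ and $\tilde\eta_{j/2}=\min\{y_{j/2}-c,\,d-y_{j/2}\}$.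
   Context: Let $a<b$, $c<d$, $M_x,M_y\ge2$ integers, $h_x=(b-a)/M_x$, $h_y=(d-c)/M_y$, $x_s=a+sh_x$ ($s\in\{0,\tfrac12,\dots,M_x\}$), $y_s=c+sh_y$ ($s\in\{0,\tfrac12,\dots,M_y\}$). On $[a,b]$ the piecewise quadratic Lagrange basis $\phi_s(x)$ is: for integers $0\le l\le M_x$, $\phi_l(x)=\frac{x-x_{l-1}}{h_x}\cdot\frac{2x-(x_l+x_{l-1})}{h_x}$ on $[x_{l-1},x_l]\cap[a,b]$, $\phi_l(x)=\frac{x_{l+1}-x}{h_x}\cdot\frac{(x_{l+1}+x_l)-2x}{h_x}$ on $[x_l,x_{l+1}]\cap[a,b]$, $0$ otherwise; for $l=1,\dots,M_x$, $\phi_{l-\frac12}(x)=\frac{4(x-x_{l-1})(x_l-x)}{h_x^2}$ on $[x_{l-1},x_l]$, $0$ otherwise. The basis $\phi_s(y)$ on $[c,d]$ is defined analogously with $y_s,h_y,M_y$. The interpolant is $$u_Q(x,y)=\sum_{l=0}^{2M_x}\sum_{r=0}^{2M_y}\phi_{l/2}(x)\phi_{r/2}(y)\,u(x_{l/2},y_{r/2}).$$ *)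

(* Defs.v *)
From Stdlib Require Import Reals Lra.
Open Scope R_scope.

Definition is_RInt (f : R -> R) (lo hi v : R) : Prop :=
  exists pr : Riemann_integrable f lo hi, RiemannInt pr = v.

Definition sing_int (f : R -> R) (lo hi p v : R) : Prop :=
  forall eps, 0 < eps -> exists delta, 0 < delta /\
    forall e, 0 < e < delta -> exists v1 v2,
      is_RInt f lo (p - e) v1 /\ is_RInt f (p + e) hi v2 /\
      Rabs (v1 + v2 - v) < eps.

Definition weak_sing_double_int (F : R -> R -> R) (a b c d p q g I : R) : Prop :=
  exists G : R -> R,
    (forall y, c <= y <= d ->
       sing_int (fun x => F x y / Rpower (Rabs (p - x)) g) a b p (G y)) /\
    sing_int (fun y => G y / Rpower (Rabs (q - y)) g) c d q I.

Definition has_deriv_in (f : R -> R) (lo hi x l : R) : Prop :=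
  forall eps, 0 < eps -> exists delta, 0 < delta /\
    forall h, h <> 0 -> Rabs h < delta -> lo <= x + h <= hi ->
      Rabs ((f (x + h) - f x) / h - l) < eps.

Definition in_rect (a b c d x y : R) : Prop := a <= x <= b /\ c <= y <= d.

Definition cont_on_rect (F : R -> R -> R) (a b c d : R) : Prop :=
  forall x y, in_rect a b c d x y ->
    forall eps, 0 < eps -> exists delta, 0 < delta /\
      forall x' y', in_rect a b c d x' y' ->
        Rabs (x' - x) < delta -> Rabs (y' - y) < delta ->
        Rabs (F x' y' - F x y) < eps.

(* u in C^k([a,b] x [c,d]): all partial derivatives D k l = d^{k+l}u/dx^k dy^l
   of order k+l <= n exist on the closed rectangle (one-sided on the boundary)
   and are continuous up to the boundary. *)
Definition Ck_rect (n : nat) (u : R -> R -> R) (a b c d : R) : Prop :=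
  exists D : nat -> nat -> R -> R -> R,
    (forall x y, in_rect a b c d x y -> D 0%nat 0%nat x y = u x y) /\
    (forall k l, (k + l <= n)%nat -> cont_on_rect (D k l) a b c d) /\
    (forall k l, (k + l < n)%nat -> forall x y, in_rect a b c d x y ->
        has_deriv_in (fun t => D k l t y) a b x (D (S k) l x y) /\
        has_deriv_in (fun t => D k l x t) c d y (D k (S l) x y)).

Definition node (a h s : R) : R := a + s * h.

Definition inI (lo hi x : R) : bool :=
  if Rle_dec lo x then if Rle_dec x hi then true else false else false.

Definition phi_int (a h : R) (M m : nat) (x : R) : R :=
  let b := a + INR M * h in
  let xm1 := node a h (INR m - 1) in
  let xm := node a h (INR m) in
  let xp1 := node a h (INR m + 1) in
  if andb (inI xm1 xm x) (inI a b x) then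
    ((x - xm1) / h) * ((2 * x - (xm + xm1)) / h)
  else if andb (inI xm xp1 x) (inI a b x) then
    ((xp1 - x) / h) * (((xp1 + xm) - 2 * x) / h)
  else 0.

Definition phi_bub (a h : R) (m : nat) (x : R) : R :=
  let xm1 := node a h (INR m - 1) in
  let xm := node a h (INR m) in
  if inI xm1 xm x then 4 * (x - xm1) * (xm - x) / (h ^ 2) else 0.

Definition phi_half (a h : R) (M l : nat) (x : R) : R :=
  if Nat.even l then phi_int a h M (Nat.div2 l) x
  else phi_bub a h (Nat.div2 (S l)) x.

Definition hnode (a h : R) (l : nat) : R := node a h (INR l / 2).

Definition uQ (u : R -> R -> R) (a b c d : R) (Mx My : nat) (x y : R) : R :=
  let hx := (b - a) / INR Mx in
  let hy := (d - c) / INR My in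
  sum_f_R0 (fun l =>
    sum_f_R0 (fun r =>
      phi_half a hx Mx l x * phi_half c hy My r y
        * u (hnode a hx l) (hnode c hy r)) (2 * My)) (2 * Mx).

(* Main.v *)
Require Import Defs.
From Stdlib Require Import Reals Lra Lia Psatz Classical ClassicalEpsilon FunctionalExtensionality.
From Coquelicot Require Import Coquelicot.
Open Scope R_scope.

Definition clamp (lo hi x : R) : R := Rmax lo (Rmin hi x).

Lemma clamp_in lo hi x : lo <= hi -> lo <= clamp lo hi x <= hi.
Proof. intros H; unfold clamp, Rmax, Rmin; repeat destruct Rle_dec; lra. Qed.

Lemma clamp_id lo hi x : lo <= x <= hi -> clamp lo hi x = x.
Proof. intros H; unfold clamp, Rmax, Rmin; repeat destruct Rle_dec; lra. Qed.

Lemma clamp_lip lo hi x y : lo <= hi -> Rabs (clamp lo hi x - clamp lo hi y) <= Rabs (x - y).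
Proof. intros H; unfold clamp, Rmax, Rmin; repeat destruct Rle_dec;
  unfold Rabs; repeat destruct Rcase_abs; lra. Qed.

Definition cont_within (lo hi : R) (f : R -> R) : Prop :=
  forall x, lo <= x <= hi -> forall eps, 0 < eps -> exists delta, 0 < delta /\
    forall x', lo <= x' <= hi -> Rabs (x' - x) < delta -> Rabs (f x' - f x) < eps.

Lemma cont_pt_cont f x : continuity_pt f x -> continuous f x.
Proof. intros H; apply continuity_pt_filterlim; exact H. Qed.

Lemma cont_cont_pt f x : continuous f x -> continuity_pt f x.
Proof. intros H; apply continuity_pt_filterlim; exact H. Qed.

Lemma cont_within_clamp lo hi f : lo <= hi -> cont_within lo hi f ->
  forall z, continuous (fun x => f (clamp lo hi x)) z.
Proof.
  intros Hlh Hf z. apply cont_pt_cont. intros eps Heps.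
  destruct (Hf (clamp lo hi z) (clamp_in lo hi z Hlh) eps Heps) as [d [Hd H]].
  exists d; split; [exact Hd|]. intros x [_ Hx]. simpl in *. unfold R_dist in *.
  apply H. apply clamp_in; auto.
  eapply Rle_lt_trans. apply clamp_lip; auto. exact Hx.
Qed.

Lemma cont_within_ext lo hi f g : (forall x, lo <= x <= hi -> f x = g x) ->
  cont_within lo hi f -> cont_within lo hi g.
Proof.
  intros E Hf x Hx eps He. destruct (Hf x Hx eps He) as [d [Hd H]].
  exists d; split; auto. intros x' Hx' Hxx. rewrite <- !E; auto.
Qed.

Lemma cont_within_of_cont lo hi f : (forall x, continuous f x) -> cont_within lo hi f.
Proof.
  intros Hf x Hx eps He. destruct (cont_cont_pt f x (Hf x) eps He) as [d [Hd H]].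
  exists d; split; auto. intros x' _ Hxx.
  destruct (Req_dec x' x) as [->|Hne]. rewrite Rminus_eq_0, Rabs_R0; lra.
  apply (H x'). split. split. exact I. auto. exact Hxx.
Qed.

Lemma cont_within_plus lo hi f g : cont_within lo hi f -> cont_within lo hi g ->
  cont_within lo hi (fun x => f x + g x).
Proof.
  intros Hf Hg x Hx eps He.
  destruct (Hf x Hx (eps/2)) as [d1 [Hd1 H1]]; [lra|].
  destruct (Hg x Hx (eps/2)) as [d2 [Hd2 H2]]; [lra|].
  exists (Rmin d1 d2); split. apply Rmin_pos; auto.
  intros x' Hx' Hxx. specialize (H1 x' Hx'). specialize (H2 x' Hx').
  assert (A1: Rabs (x'-x) < d1) by (eapply Rlt_le_trans; [exact Hxx| apply Rmin_l]).
  assert (A2: Rabs (x'-x) < d2) by (eapply Rlt_le_trans; [exact Hxx| apply Rmin_r]).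
  specialize (H1 A1); specialize (H2 A2).
  replace (f x' + g x' - (f x + g x)) with ((f x' - f x) + (g x' - g x)) by ring.
  eapply Rle_lt_trans. apply Rabs_triang. lra.
Qed.

Lemma cont_within_scal lo hi f k : cont_within lo hi f -> cont_within lo hi (fun x => k * f x).
Proof.
  intros Hf x Hx eps He.
  destruct (Hf x Hx (eps / (Rabs k + 1))) as [d [Hd H]].
  apply Rdiv_lt_0_compat; auto. pose proof (Rabs_pos k); lra.
  exists d; split; auto. intros x' Hx' Hxx. specialize (H x' Hx' Hxx).
  rewrite <- Rmult_minus_distr_l, Rabs_mult.
  pose proof (Rabs_pos k).
  assert (Rabs k * Rabs (f x' - f x) <= Rabs k * (eps / (Rabs k + 1))).
  apply Rmult_le_compat_l; lra.
  assert (Rabs k * (eps / (Rabs k + 1)) < eps).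
  { apply (Rmult_lt_reg_r (Rabs k + 1)). lra. unfold Rdiv.
    rewrite Rmult_assoc, (Rmult_assoc eps), Rinv_l by lra. nra. }
  lra.
Qed.

Lemma cont_within_opp lo hi f : cont_within lo hi f -> cont_within lo hi (fun x => - f x).
Proof. intros H. apply (cont_within_ext _ _ (fun x => -1 * f x)). intros; ring.
  apply cont_within_scal; auto. Qed.

Lemma cont_within_minus lo hi f g : cont_within lo hi f -> cont_within lo hi g ->
  cont_within lo hi (fun x => f x - g x).
Proof. intros Hf Hg. apply (cont_within_ext _ _ (fun x => f x + - g x)). intros; ring.
  apply cont_within_plus; auto. apply cont_within_opp; auto. Qed.

Lemma cont_within_const lo hi k : cont_within lo hi (fun _ => k).
Proof. intros x Hx eps He. exists 1; split. lra. intros. rewrite Rminus_eq_0, Rabs_R0; auto. Qed.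

Lemma cont_within_sum lo hi (F : nat -> R -> R) n :
  (forall l, (l <= n)%nat -> cont_within lo hi (F l)) ->
  cont_within lo hi (fun x => sum_f_R0 (fun l => F l x) n).
Proof.
  induction n; intros H; simpl.
  - apply H; lia.
  - apply cont_within_plus. apply IHn. intros; apply H; lia. apply H; lia.
Qed.

Lemma cont_within_mult_cont lo hi f g : cont_within lo hi f -> (forall x, continuous g x) ->
  cont_within lo hi (fun x => f x * g x).
Proof.
  intros Hf Hg. assert (Hlh: lo <= hi \/ hi < lo) by lra. destruct Hlh as [Hlh|Hlh].
  2:{ intros x Hx. lra. }
  apply (cont_within_ext _ _ (fun x => f (clamp lo hi x) * g x)).
  intros; rewrite clamp_id; auto.
  apply cont_within_of_cont. intros z.
  apply (continuous_mult (fun x => f (clamp lo hi x)) g). apply cont_within_clamp; auto. auto.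
Qed.

Lemma cont_within_mult lo hi f g : cont_within lo hi f -> cont_within lo hi g ->
  cont_within lo hi (fun x => f x * g x).
Proof.
  intros Hf Hg. assert (Hlh: lo <= hi \/ hi < lo) by lra. destruct Hlh as [Hlh|Hlh].
  2:{ intros x Hx. lra. }
  apply (cont_within_ext _ _ (fun x => f (clamp lo hi x) * g (clamp lo hi x))).
  intros; rewrite clamp_id; auto.
  apply cont_within_of_cont. intros z.
  apply (continuous_mult (fun x => f (clamp lo hi x)) (fun x => g (clamp lo hi x)));
  apply cont_within_clamp; auto.
Qed.

Lemma cont_within_bound lo hi f : lo <= hi -> cont_within lo hi f ->
  exists B, 0 <= B /\ forall x, lo <= x <= hi -> Rabs (f x) <= B.
Proof.
  intros Hlh Hf.
  destruct (continuity_ab_maj (fun x => Rabs (f (clamp lo hi x))) lo hi Hlh) as [m [Hm _]].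
  { intros c0 _. apply cont_cont_pt.
    apply (continuous_comp (fun x => f (clamp lo hi x)) Rabs).
    apply cont_within_clamp; auto. apply cont_pt_cont. apply Rcontinuity_abs. }
  exists (Rabs (f (clamp lo hi m))). split. apply Rabs_pos.
  intros x Hx. specialize (Hm x Hx). simpl in Hm. rewrite clamp_id in Hm; auto.
Qed.

Lemma Rpower_pos x y : 0 < Rpower x y.
Proof. unfold Rpower; apply exp_pos. Qed.

Lemma rp_incr z1 z2 k : 0 <= k -> 0 < z1 <= z2 -> Rpower z1 k <= Rpower z2 k.
Proof. intros; apply Rle_Rpower_l; auto. Qed.

Lemma rp_decr z1 z2 k : 0 <= k -> 0 < z1 <= z2 -> Rpower z2 (-k) <= Rpower z1 (-k).
Proof.
  intros Hk Hz. rewrite !Rpower_Ropp. apply Rinv_le_contravar. apply Rpower_pos.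
  apply rp_incr; auto.
Qed.

Lemma rp_derive y x : 0 < x -> is_derive (fun z => Rpower z y) x (y * Rpower x (y - 1)).
Proof. intros; apply is_derive_Reals, derivable_pt_lim_power; auto. Qed.

Lemma rp_continuous y x : 0 < x -> continuous (fun z => Rpower z y) x.
Proof. intros H. apply cont_pt_cont. apply derivable_continuous_pt.
  exists (y * Rpower x (y - 1)). apply derivable_pt_lim_power; auto. Qed.

Lemma rp_mvt y s t : 0 < s <= t -> exists xi, s <= xi <= t /\
  Rpower t y - Rpower s y = y * Rpower xi (y - 1) * (t - s).
Proof.
  intros Hs. destruct (MVT_gen (fun z => Rpower z y) s t (fun z => y * Rpower z (y-1))) as [xi [Hxi E]].
  - intros x Hx. rewrite Rmin_left, Rmax_right in Hx by lra. apply rp_derive; lra.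
  - intros x Hx. rewrite Rmin_left, Rmax_right in Hx by lra. apply cont_cont_pt, rp_continuous; lra.
  - rewrite Rmin_left, Rmax_right in Hxi by lra. exists xi; split; auto.
Qed.

Lemma rp_lip g d s t : 0 < g -> 0 < d -> d <= s -> d <= t ->
  Rabs (Rpower s (-g) - Rpower t (-g)) <= g * Rpower d (-(g+1)) * Rabs (s - t).
Proof.
  intros Hg Hd Hs Ht.
  assert (key: forall s t, d <= s <= t -> Rabs (Rpower s (-g) - Rpower t (-g)) <= g * Rpower d (-(g+1)) * Rabs (s - t)).
  { clear s t Hs Ht. intros s t Hst.
    destruct (rp_mvt (-g) s t) as [xi [Hxi E]]. lra.
    rewrite Rabs_minus_sym, E.
    replace (-g - 1) with (-(g+1)) by ring.
    rewrite !Rabs_mult. rewrite Rabs_Ropp, (Rabs_right g) by lra.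
    rewrite (Rabs_right (Rpower xi _)) by (apply Rle_ge, Rlt_le, Rpower_pos).
    rewrite (Rabs_minus_sym s t).
    apply Rmult_le_compat_r. apply Rabs_pos. apply Rmult_le_compat_l. lra.
    apply rp_decr; lra. }
  destruct (Rle_dec s t). apply key; lra.
  rewrite Rabs_minus_sym, (Rabs_minus_sym s). apply key; lra.
Qed.

Lemma rp_tele g d h : 0 < g -> 0 < h -> h / 2 <= d ->
  h * g * Rpower d (-(g+1)) <= Rpower 3 (g+1) * (Rpower d (-g) - Rpower (d+h) (-g)).
Proof.
  intros Hg Hh Hd.
  destruct (rp_mvt (-g) d (d+h)) as [xi [Hxi E]]. lra.
  replace (Rpower d (-g) - Rpower (d + h) (-g)) with (g * Rpower xi (-g-1) * h)
    by (replace (d + h - d) with h in E by ring; lra).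
  replace (-g-1) with (-(g+1)) by ring.
  assert (H3: Rpower (3*d) (-(g+1)) <= Rpower xi (-(g+1))) by (apply rp_decr; lra).
  rewrite <- (Rpower_mult_distr 3 d) in H3 by lra.
  rewrite Rpower_Ropp in H3. 
  assert (P3: 0 < Rpower 3 (g+1)) by apply Rpower_pos.
  assert (Pd: 0 < Rpower d (-(g+1))) by apply Rpower_pos.
  assert (Rpower d (-(g+1)) <= Rpower 3 (g+1) * Rpower xi (-(g+1))).
  { apply (Rmult_le_reg_l (/ Rpower 3 (g+1))). apply Rinv_0_lt_compat; auto.
    rewrite <- Rmult_assoc, Rinv_l, Rmult_1_l by lra. exact H3. }
  replace (Rpower 3 (g + 1) * (g * Rpower xi (- (g + 1)) * h)) with
    ((h * g) * (Rpower 3 (g + 1) * Rpower xi (- (g + 1)))) by ring.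
  apply Rmult_le_compat_l. apply Rlt_le, Rmult_lt_0_compat; lra. exact H.
Qed.

Definition wte (p g e x : R) : R := Rpower (Rmax e (Rabs (p - x))) (-g).

Lemma Rmax_pos_l e z : 0 < e -> 0 < Rmax e z.
Proof. intros; eapply Rlt_le_trans; [eassumption| apply Rmax_l]. Qed.

Lemma wte_pos p g e x : 0 < wte p g e x.
Proof. apply Rpower_pos. Qed.

Lemma wte_cont p g e x : 0 < e -> continuous (wte p g e) x.
Proof.
  intros He. unfold wte.
  apply (continuous_comp (fun x => Rmax e (Rabs (p - x))) (fun z => Rpower z (-g))).
  - apply cont_pt_cont.
    apply (continuity_pt_ext (fun x => (e + Rabs (p - x) + Rabs (e - Rabs (p - x))) / 2)).
    { intros z. unfold Rmax; destruct Rle_dec; unfold Rabs at 2; destruct Rcase_abs; lra. }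
    apply continuity_pt_mult. 2: apply continuity_pt_const; intros ? ?; auto.
    assert (C1: continuity_pt (fun x0 => Rabs (p - x0)) x).
    { apply (continuity_pt_comp (fun x0 => p - x0) Rabs). apply continuity_pt_minus.
      apply continuity_pt_const; intros ? ?; auto. apply derivable_continuous_pt, derivable_pt_id.
      apply Rcontinuity_abs. }
    apply continuity_pt_plus. apply continuity_pt_plus. apply continuity_pt_const; intros ? ?; auto.
    exact C1.
    apply (continuity_pt_comp (fun x0 => e - Rabs (p - x0)) Rabs).
    apply continuity_pt_minus. apply continuity_pt_const; intros ? ?; auto. exact C1.
    apply Rcontinuity_abs.
  - apply rp_continuous, Rmax_pos_l; auto.
Qed.

Lemma wte_le_e p g e x : 0 < e -> 0 <= g -> wte p g e x <= Rpower e (-g).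
Proof. intros He Hg. unfold wte. apply rp_decr; auto. split; auto. apply Rmax_l. Qed.

Lemma wte_eq p g e x : e <= Rabs (p - x) -> wte p g e x = Rpower (Rabs (p - x)) (-g).
Proof. intros H. unfold wte. rewrite Rmax_right; auto. Qed.

Lemma wte_sym p g e x : wte p g e (2 * p - x) = wte p g e x.
Proof. unfold wte. f_equal. f_equal. rewrite <- (Rabs_Ropp (p - x)). f_equal. ring. Qed.

Lemma rp_half z g : 0 < z -> Rpower (z / 2) (-g) = Rpower 2 g * Rpower z (-g).
Proof.
  intros Hz. unfold Rdiv. rewrite <- Rpower_mult_distr by lra.
  rewrite Rmult_comm. f_equal. unfold Rpower. rewrite ln_Rinv by lra. f_equal; ring.
Qed.

Lemma wte_maj p g e x : 0 < e -> 0 <= g ->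
  wte p g e x <= Rpower 2 g * Rpower (Rabs (p - x) + e) (-g).
Proof.
  intros He Hg. pose proof (Rabs_pos (p - x)). rewrite <- rp_half by lra.
  unfold wte. apply rp_decr; auto. split. lra.
  unfold Rmax; destruct Rle_dec; lra.
Qed.

Definition gcont (f : R -> R) := forall x, continuous f x.

Lemma exR f a b : gcont f -> ex_RInt f a b.
Proof. intros H; apply (ex_RInt_continuous (V:=R_CompleteNormedModule)); intros; apply H. Qed.

Lemma gcont_plus f g : gcont f -> gcont g -> gcont (fun x => f x + g x).
Proof. intros Hf Hg x. apply (continuous_plus f g); auto. Qed.
Lemma gcont_mult f g : gcont f -> gcont g -> gcont (fun x => f x * g x).
Proof. intros Hf Hg x. apply (continuous_mult f g); auto. Qed.
Lemma gcont_const k : gcont (fun _ => k).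
Proof. intros x; apply continuous_const. Qed.
Lemma gcont_scal k f : gcont f -> gcont (fun x => k * f x).
Proof. intros; apply gcont_mult; auto. apply gcont_const. Qed.
Lemma gcont_ext f g : (forall x, f x = g x) -> gcont f -> gcont g.
Proof. intros E H. assert (f = g) by (apply functional_extensionality; auto). subst; auto. Qed.
Lemma gcont_opp f : gcont f -> gcont (fun x => - f x).
Proof. intros H. apply (gcont_ext (fun x => -1 * f x)). intros; ring.
  apply gcont_scal; auto. Qed.
Lemma gcont_minus f g : gcont f -> gcont g -> gcont (fun x => f x - g x).
Proof. intros Hf Hg. apply (gcont_ext (fun x => f x + - g x)). intros; ring.
  apply gcont_plus; auto. apply gcont_opp; auto. Qed.
Lemma gcont_id : gcont (fun x => x).
Proof. intros x; apply continuous_id. Qed.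
Lemma gcont_abs f : gcont f -> gcont (fun x => Rabs (f x)).
Proof. intros H x. apply (continuous_comp f Rabs). auto. apply cont_pt_cont, Rcontinuity_abs. Qed.
Lemma gcont_clamp lo hi f : lo <= hi -> cont_within lo hi f -> gcont (fun x => f (clamp lo hi x)).
Proof. intros; intros z; apply cont_within_clamp; auto. Qed.
Lemma gcont_wte p g e : 0 < e -> gcont (wte p g e).
Proof. intros He x; apply wte_cont; auto. Qed.
Lemma gcont_sum (F : nat -> R -> R) n : (forall l, gcont (F l)) -> gcont (fun x => sum_f_R0 (fun l => F l x) n).
Proof. induction n; intros H; simpl. apply H. apply gcont_plus; auto. Qed.

Lemma RInt_plusR f g a b : ex_RInt f a b -> ex_RInt g a b ->
  RInt (fun x => f x + g x) a b = RInt f a b + RInt g a b.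
Proof. intros; apply (RInt_plus f g); auto. Qed.
Lemma RInt_scalR f a b k : ex_RInt f a b -> RInt (fun x => k * f x) a b = k * RInt f a b.
Proof. intros; apply (RInt_scal f a b k); auto. Qed.
Lemma RInt_minusR f g a b : ex_RInt f a b -> ex_RInt g a b ->
  RInt (fun x => f x - g x) a b = RInt f a b - RInt g a b.
Proof. intros; apply (RInt_minus f g); auto. Qed.
Lemma RInt_ChaslesR f a b c : ex_RInt f a b -> ex_RInt f b c ->
  RInt f a b + RInt f b c = RInt f a c.
Proof. intros; apply (RInt_Chasles f); auto. Qed.
Lemma RInt_constR a b k : RInt (fun _ => k) a b = (b - a) * k.
Proof. rewrite RInt_const. reflexivity. Qed.
Lemma RInt_sumR (F : nat -> R -> R) n a b : (forall l, ex_RInt (F l) a b) ->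
  RInt (fun x => sum_f_R0 (fun l => F l x) n) a b = sum_f_R0 (fun l => RInt (F l) a b) n.
Proof.
  induction n; intros H; simpl. reflexivity.
  rewrite RInt_plusR; auto. rewrite IHn; auto.
  clear IHn. induction n; simpl. apply H. apply (ex_RInt_plus (V:=R_NormedModule)); auto.
Qed.

Lemma RInt_abs_bound f a b B : a <= b -> gcont f -> (forall x, a <= x <= b -> Rabs (f x) <= B) ->
  Rabs (RInt f a b) <= (b - a) * B.
Proof. intros Hab Hf HB. apply abs_RInt_le_const; auto. apply exR; auto. Qed.

Lemma RInt_leR f g a b : a <= b -> gcont f -> gcont g -> (forall x, a <= x <= b -> f x <= g x) ->
  RInt f a b <= RInt g a b.
Proof. intros. apply RInt_le; auto; try apply exR; auto. intros; apply H2; lra. Qed.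

Lemma RInt_abs_le_int f g a b : a <= b -> gcont f -> gcont g ->
  (forall x, a <= x <= b -> Rabs (f x) <= g x) -> Rabs (RInt f a b) <= RInt g a b.
Proof.
  intros Hab Hf Hg H. eapply Rle_trans. apply abs_RInt_le; auto. apply exR; auto.
  apply RInt_leR; auto. apply gcont_abs; auto.
Qed.

Lemma RInt_nonneg f a b : a <= b -> gcont f -> (forall x, a <= x <= b -> 0 <= f x) -> 0 <= RInt f a b.
Proof. intros. apply RInt_ge_0; auto. apply exR; auto. intros; apply H1; lra. Qed.

Lemma is_derive_rp_lin y k m x : 0 < k * x + m ->
  is_derive (fun z => Rpower (k * z + m) y) x (k * (y * Rpower (k * x + m) (y - 1))).
Proof.
  intros H. apply (is_derive_comp (fun z => Rpower z y) (fun z => k * z + m) x (y * Rpower (k*x+m) (y-1)) k).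
  apply rp_derive; auto.
  auto_derive; [auto| ring].
Qed.

Lemma cont_rp_lin y k m x : 0 < k * x + m -> continuous (fun z => Rpower (k * z + m) y) x.
Proof.
  intros H. apply (continuous_comp (fun z => k * z + m) (fun z => Rpower z y)).
  apply (continuous_plus (fun z => k * z) (fun _ => m)).
  apply (continuous_mult (fun _ => k) (fun z => z)). apply continuous_const. apply continuous_id.
  apply continuous_const. apply rp_continuous; auto.
Qed.

Lemma RInt_rp_lin g k m s t : s <= t -> g <> 1 -> k <> 0 ->
  (forall x, s <= x <= t -> 0 < k * x + m) ->
  RInt (fun x => Rpower (k * x + m) (-g)) s t =
  (Rpower (k * t + m) (1 - g) - Rpower (k * s + m) (1 - g)) / (k * (1 - g)).
Proof.
  intros Hst Hg Hk Hpos.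
  apply is_RInt_unique.
  apply (is_RInt_ext (V:=R_NormedModule) (fun x => / (k * (1 - g)) * (k * ((1 - g) * Rpower (k * x + m) (1 - g - 1))))).
  { intros x Hx. simpl. replace (1 - g - 1) with (-g) by ring. field. split; auto. lra. }
  replace ((Rpower (k * t + m) (1 - g) - Rpower (k * s + m) (1 - g)) / (k * (1 - g)))
    with (scal (/ (k * (1 - g))) (minus (Rpower (k * t + m) (1 - g)) (Rpower (k * s + m) (1 - g)))).
  2:{ unfold Rdiv; rewrite Rmult_comm; reflexivity. }
  apply (is_RInt_scal (V:=R_NormedModule)).
  apply (is_RInt_derive (V:=R_CompleteNormedModule) (fun x => Rpower (k * x + m) (1 - g))).
  - intros x Hx. rewrite Rmin_left, Rmax_right in Hx by lra. apply is_derive_rp_lin; auto.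
  - intros x Hx. rewrite Rmin_left, Rmax_right in Hx by lra.
    apply (continuous_mult (fun _ => k) (fun x => (1 - g) * Rpower (k * x + m) (1 - g - 1))).
    apply continuous_const.
    apply (continuous_mult (fun _ => 1 - g) (fun x => Rpower (k * x + m) (1 - g - 1))).
    apply continuous_const. apply cont_rp_lin; auto.
Qed.

Lemma gcont_rp_max e k m y : 0 < e -> gcont (fun x => Rpower (Rmax e (k * x + m)) y).
Proof.
  intros He x. apply (continuous_comp (fun x => Rmax e (k * x + m)) (fun z => Rpower z y)).
  2: apply rp_continuous; apply Rmax_pos_l; lra.
  apply cont_pt_cont. apply (continuity_pt_ext (fun x => (e + (k * x + m) + Rabs (e - (k * x + m))) / 2)).
  { intros z. unfold Rmax; destruct Rle_dec; unfold Rabs; destruct Rcase_abs; lra. }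
  apply continuity_pt_mult. 2: apply continuity_pt_const; intros ? ?; auto.
  apply continuity_pt_plus. apply continuity_pt_plus. apply continuity_pt_const; intros ? ?; auto.
  apply derivable_continuous_pt; apply derivable_pt_plus. apply derivable_pt_scal, derivable_pt_id.
  apply derivable_pt_const.
  apply (continuity_pt_comp (fun x => e - (k * x + m)) Rabs).
  apply derivable_continuous_pt; apply derivable_pt_minus. apply derivable_pt_const.
  apply derivable_pt_plus. apply derivable_pt_scal, derivable_pt_id. apply derivable_pt_const.
  apply Rcontinuity_abs.
Qed.

Section W.
Variables (p g e : R).
Hypothesis (Hg : 0 < g < 1) (He : 0 < e).

Lemma wint_R s t : p <= s <= t ->
  RInt (wte p g e) s t <= Rpower 2 g / (1 - g) * (Rpower (t - p + e) (1 - g) - Rpower (s - p + e) (1 - g)).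
Proof.
  intros Hst.
  apply Rle_trans with (RInt (fun x => Rpower 2 g * Rpower (Rmax e (1 * x + (e - p))) (-g)) s t).
  - apply RInt_leR. lra. apply gcont_wte; auto.
    apply gcont_scal. apply gcont_rp_max; auto.
    intros x Hx. eapply Rle_trans. apply wte_maj; lra. apply Rmult_le_compat_l. apply Rlt_le, Rpower_pos.
    rewrite Rmax_right by lra. rewrite Rabs_left1 by lra. replace (1 * x + (e - p)) with (-(p-x)+e) by ring. lra.
  - rewrite RInt_scalR. 2:{ apply exR. apply gcont_rp_max; auto. }
    rewrite (RInt_ext _ (fun x => Rpower (1 * x + (e - p)) (-g))).
    2:{ intros x Hx. rewrite Rmin_left, Rmax_right in Hx by lra. rewrite Rmax_right by lra. auto. }
    rewrite RInt_rp_lin; try lra. 2: intros; lra.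
    right.
    replace (1 * t + (e - p)) with (t - p + e) by ring. replace (1 * s + (e - p)) with (s - p + e) by ring. field. lra.
Qed.

Lemma wint_L s t : s <= t <= p ->
  RInt (wte p g e) s t <= Rpower 2 g / (1 - g) * (Rpower (p - s + e) (1 - g) - Rpower (p - t + e) (1 - g)).
Proof.
  intros Hst.
  apply Rle_trans with (RInt (fun x => Rpower 2 g * Rpower (Rmax e ((-1) * x + (p + e))) (-g)) s t).
  - apply RInt_leR. lra. apply gcont_wte; auto.
    apply gcont_scal. apply gcont_rp_max; auto.
    intros x Hx. eapply Rle_trans. apply wte_maj; lra. apply Rmult_le_compat_l. apply Rlt_le, Rpower_pos.
    rewrite Rmax_right by lra. rewrite Rabs_right by lra. replace (-1 * x + (p + e)) with (p - x + e) by ring. lra.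
  - rewrite RInt_scalR. 2:{ apply exR. apply gcont_rp_max; auto. }
    rewrite (RInt_ext _ (fun x => Rpower ((-1) * x + (p + e)) (-g))).
    2:{ intros x Hx. rewrite Rmin_left, Rmax_right in Hx by lra. rewrite Rmax_right by lra. auto. }
    rewrite RInt_rp_lin; try lra. 2: intros; lra.
    right.
    replace (-1 * t + (p + e)) with (p - t + e) by ring. replace (-1 * s + (p + e)) with (p - s + e) by ring.
    field. lra.
Qed.

Lemma wint_full lo hi : lo <= p <= hi ->
  RInt (wte p g e) lo hi <= Rpower 2 g / (1 - g) * (Rpower (p - lo + e) (1 - g) + Rpower (hi - p + e) (1 - g)).
Proof.
  intros H. rewrite <- (RInt_ChaslesR _ lo p hi) by (apply exR, gcont_wte; auto).
  pose proof (wint_L lo p). pose proof (wint_R p hi).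
  assert (0 < Rpower 2 g / (1 - g)) by (apply Rdiv_lt_0_compat; [apply Rpower_pos|lra]).
  pose proof (Rpower_pos (p - p + e) (1 - g)).
  assert (Rpower 2 g / (1 - g) * Rpower (p - p + e) (1 - g) > 0) by (apply Rmult_lt_0_compat; lra).
  nra.
Qed.

Lemma wint_near d : 0 <= d ->
  RInt (wte p g e) (p - d) (p + d) <= 2 * (Rpower 2 g / (1 - g)) * Rpower (d + e) (1 - g).
Proof.
  intros Hd. eapply Rle_trans. apply wint_full. lra.
  replace (p - (p - d) + e) with (d + e) by ring. replace (p + d - p + e) with (d + e) by ring. lra.
Qed.
End W.

Lemma RInt_extR (f g : R -> R) a b : (forall x, Rmin a b < x < Rmax a b -> f x = g x) -> RInt f a b = RInt g a b.
Proof. intros; apply RInt_ext; auto. Qed.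

Definition islim (J : R -> R) (v : R) : Prop :=
  forall eta, 0 < eta -> exists delta, 0 < delta /\ forall e, 0 < e < delta -> Rabs (J e - v) < eta.

Lemma islim_unique J v w : islim J v -> islim J w -> v = w.
Proof.
  intros H1 H2. destruct (Req_dec v w) as [|Hne]; auto. exfalso.
  set (eta := Rabs (v - w) / 2). assert (Heta: 0 < eta).
  { unfold eta. apply Rdiv_lt_0_compat; [|lra]. apply Rabs_pos_lt. lra. }
  destruct (H1 eta Heta) as [d1 [Hd1 K1]]. destruct (H2 eta Heta) as [d2 [Hd2 K2]].
  set (e := Rmin d1 d2 / 2). assert (0 < Rmin d1 d2) by (apply Rmin_pos; auto).
  assert (Ha: 0 < e < d1). { unfold e; split. lra. pose proof (Rmin_l d1 d2); lra. }
  assert (Hb: 0 < e < d2). { unfold e; split. lra. pose proof (Rmin_r d1 d2); lra. }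
  specialize (K1 e Ha). specialize (K2 e Hb).
  assert (Rabs (v - w) <= Rabs (J e - v) + Rabs (J e - w)).
  { replace (v - w) with (-(J e - v) + (J e - w)) by ring. eapply Rle_trans. apply Rabs_triang.
    rewrite Rabs_Ropp. lra. }
  unfold eta in *. lra.
Qed.

Lemma islim_ext J J' v d : 0 < d -> (forall e, 0 < e < d -> J e = J' e) -> islim J v -> islim J' v.
Proof.
  intros Hd E H eta Heta. destruct (H eta Heta) as [d1 [Hd1 K]].
  exists (Rmin d d1); split. apply Rmin_pos; auto.
  intros e He. rewrite <- E. apply K. split. lra. eapply Rlt_le_trans. apply He. apply Rmin_r.
  split. lra. eapply Rlt_le_trans. apply He. apply Rmin_l.
Qed.

Lemma islim_plus J1 J2 v1 v2 : islim J1 v1 -> islim J2 v2 -> islim (fun e => J1 e + J2 e) (v1 + v2).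
Proof.
  intros H1 H2 eta Heta.
  destruct (H1 (eta/2)) as [d1 [Hd1 K1]]; [lra|]. destruct (H2 (eta/2)) as [d2 [Hd2 K2]]; [lra|].
  exists (Rmin d1 d2); split. apply Rmin_pos; auto.
  intros e He. assert (e < d1) by (eapply Rlt_le_trans; [apply He| apply Rmin_l]).
  assert (e < d2) by (eapply Rlt_le_trans; [apply He| apply Rmin_r]).
  specialize (K1 e (conj (proj1 He) H)). specialize (K2 e (conj (proj1 He) H0)).
  replace (J1 e + J2 e - (v1 + v2)) with ((J1 e - v1) + (J2 e - v2)) by ring.
  eapply Rle_lt_trans. apply Rabs_triang. lra.
Qed.

Lemma islim_scal J v k : islim J v -> islim (fun e => k * J e) (k * v).
Proof.
  intros H eta Heta. destruct (H (eta / (Rabs k + 1))) as [d [Hd K]].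
  apply Rdiv_lt_0_compat; auto. pose proof (Rabs_pos k); lra.
  exists d; split; auto. intros e He. specialize (K e He).
  rewrite <- Rmult_minus_distr_l, Rabs_mult. pose proof (Rabs_pos k).
  assert (Rabs k * Rabs (J e - v) <= Rabs k * (eta / (Rabs k + 1))) by (apply Rmult_le_compat_l; lra).
  assert (Rabs k * (eta / (Rabs k + 1)) < eta).
  { apply (Rmult_lt_reg_r (Rabs k + 1)). lra. unfold Rdiv.
    rewrite Rmult_assoc, (Rmult_assoc eta), Rinv_l by lra. nra. }
  lra.
Qed.

Lemma islim_const k : islim (fun _ => k) k.
Proof. intros eta H. exists 1; split. lra. intros. rewrite Rminus_eq_0, Rabs_R0; auto. Qed.

Lemma islim_sum (J : nat -> R -> R) (v : nat -> R) n :
  (forall l, (l <= n)%nat -> islim (J l) (v l)) ->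
  islim (fun e => sum_f_R0 (fun l => J l e) n) (sum_f_R0 v n).
Proof.
  induction n; intros H; simpl. apply H; lia.
  apply islim_plus. apply IHn; intros; apply H; lia. apply H; lia.
Qed.

Lemma islim_bound J v B e0 : 0 < e0 -> (forall e, 0 < e < e0 -> Rabs (J e) <= B) -> islim J v -> Rabs v <= B.
Proof.
  intros He0 HB H. apply Rnot_lt_le. intros Hlt.
  destruct (H (Rabs v - B)) as [d [Hd K]]. lra.
  set (e := Rmin d e0 / 2). assert (0 < Rmin d e0) by (apply Rmin_pos; auto).
  assert (Ha: 0 < e < d). { unfold e; split. lra. pose proof (Rmin_l d e0); lra. }
  assert (Hb: 0 < e < e0). { unfold e; split. lra. pose proof (Rmin_r d e0); lra. }
  specialize (K e Ha). specialize (HB e Hb).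
  assert (Rabs v <= Rabs (J e) + Rabs (J e - v)).
  { replace v with (J e - (J e - v)) at 1 by ring. eapply Rle_trans. apply Rabs_triang. rewrite Rabs_Ropp. lra. }
  lra.
Qed.

Lemma small_rp k : 0 < k -> forall eta, 0 < eta -> exists delta, 0 < delta /\
  forall m, 0 < m < delta -> Rpower m k < eta.
Proof.
  intros Hk eta Heta. exists (Rpower eta (/ k)). split. apply Rpower_pos.
  intros m Hm. assert (E: Rpower (Rpower eta (/ k)) k = eta).
  { rewrite Rpower_mult, Rinv_l, Rpower_1; auto; lra. }
  rewrite <- E. apply Rlt_Rpower_l; auto.
Qed.

Definition Jw (lo hi p g : R) (F : R -> R) (e : R) : R :=
  RInt (fun x => F (clamp lo hi x) * wte p g e x) lo hi.

Section JW.
Variables (lo hi p g : R).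
Hypothesis (Hlp : lo < p) (Hph : p < hi) (Hg : 0 < g < 1).

Lemma gcont_Fw F e : 0 < e -> cont_within lo hi F -> gcont (fun x => F (clamp lo hi x) * wte p g e x).
Proof. intros He HF. apply gcont_mult. apply gcont_clamp; auto; lra. apply gcont_wte; auto. Qed.

Lemma Jw_plus F G e : 0 < e -> cont_within lo hi F -> cont_within lo hi G ->
  Jw lo hi p g (fun x => F x + G x) e = Jw lo hi p g F e + Jw lo hi p g G e.
Proof.
  intros He HF HG. unfold Jw. rewrite <- RInt_plusR; try (apply exR, gcont_Fw; auto).
  apply RInt_extR. intros; ring.
Qed.

Lemma Jw_scal F k e : 0 < e -> cont_within lo hi F ->
  Jw lo hi p g (fun x => k * F x) e = k * Jw lo hi p g F e.
Proof.
  intros He HF. unfold Jw. rewrite <- RInt_scalR; try (apply exR, gcont_Fw; auto).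
  apply RInt_extR. intros; ring.
Qed.

Lemma Jw_ext F G e : (forall x, lo <= x <= hi -> F x = G x) -> Jw lo hi p g F e = Jw lo hi p g G e.
Proof.
  intros E. unfold Jw. apply RInt_extR. intros x Hx. rewrite E. auto. apply clamp_in; lra.
Qed.

Lemma Jw_sum (F : nat -> R -> R) (c : nat -> R) n e : 0 < e -> (forall l, cont_within lo hi (F l)) ->
  Jw lo hi p g (fun x => sum_f_R0 (fun l => c l * F l x) n) e = sum_f_R0 (fun l => c l * Jw lo hi p g (F l) e) n.
Proof.
  intros He HF. induction n; simpl. apply Jw_scal; auto.
  rewrite Jw_plus; auto. rewrite IHn, Jw_scal; auto.
  apply cont_within_sum. intros; apply cont_within_scal; auto. apply cont_within_scal; auto.
Qed.

Definition C2 := Rpower 2 g / (1 - g).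
Lemma C2_pos : 0 < C2.
Proof. unfold C2. apply Rdiv_lt_0_compat. apply Rpower_pos. lra. Qed.

Definition Wb (e : R) := C2 * (Rpower (p - lo + e) (1 - g) + Rpower (hi - p + e) (1 - g)).

Lemma Jw_bound F B e : 0 < e -> cont_within lo hi F -> (forall x, lo <= x <= hi -> Rabs (F x) <= B) ->
  Rabs (Jw lo hi p g F e) <= B * Wb e.
Proof.
  intros He HF HB. unfold Jw.
  eapply Rle_trans. apply (RInt_abs_le_int _ (fun x => B * wte p g e x)). lra.
  apply gcont_Fw; auto. apply gcont_scal, gcont_wte; auto.
  intros x Hx. rewrite Rabs_mult. rewrite (Rabs_right (wte _ _ _ _)) by (apply Rle_ge, Rlt_le, wte_pos).
  apply Rmult_le_compat_r. apply Rlt_le, wte_pos. apply HB, clamp_in; lra.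
  rewrite RInt_scalR by (apply exR, gcont_wte; auto).
  assert (0 <= B). { eapply Rle_trans. apply Rabs_pos. apply (HB lo). lra. }
  apply Rmult_le_compat_l; auto. unfold Wb, C2. apply wint_full; lra.
Qed.

Lemma Jw_diff F B e e' : 0 < e <= e' -> e' <= Rmin (p - lo) (hi - p) -> cont_within lo hi F ->
  (forall x, lo <= x <= hi -> Rabs (F x) <= B) ->
  Rabs (Jw lo hi p g F e - Jw lo hi p g F e') <= B * (4 * C2 * Rpower (2 * e') (1 - g)).
Proof.
  intros He He' HF HB.
  assert (B0: 0 <= B). { eapply Rle_trans. apply Rabs_pos. apply (HB lo). lra. }
  assert (M1: e' <= p - lo) by (eapply Rle_trans; [apply He'| apply Rmin_l]).
  assert (M2: e' <= hi - p) by (eapply Rle_trans; [apply He'| apply Rmin_r]).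
  set (H := fun x => F (clamp lo hi x) * (wte p g e x - wte p g e' x)).
  assert (GH: gcont H). { apply gcont_mult. apply gcont_clamp; auto; lra. apply gcont_minus; apply gcont_wte; lra. }
  assert (E1: Jw lo hi p g F e - Jw lo hi p g F e' = RInt H lo hi).
  { unfold Jw. rewrite <- RInt_minusR by (apply exR, gcont_Fw; auto; lra). apply RInt_extR. intros; unfold H; ring. }
  rewrite E1.
  rewrite <- (RInt_ChaslesR H lo (p - e') hi) by (apply exR; auto).
  rewrite <- (RInt_ChaslesR H (p - e') (p + e') hi) by (apply exR; auto).
  assert (Z1: RInt H lo (p - e') = 0).
  { rewrite (RInt_extR _ (fun _ => 0)). rewrite RInt_constR. simpl. ring.
    intros x Hx. rewrite Rmin_left, Rmax_right in Hx by lra. unfold H.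
    rewrite !wte_eq. ring. rewrite Rabs_right; lra. rewrite Rabs_right; lra. }
  assert (Z2: RInt H (p + e') hi = 0).
  { rewrite (RInt_extR _ (fun _ => 0)). rewrite RInt_constR. simpl. ring.
    intros x Hx. rewrite Rmin_left, Rmax_right in Hx by lra. unfold H.
    rewrite !wte_eq. ring. rewrite Rabs_left; lra. rewrite Rabs_left; lra. }
  rewrite Z1, Z2, Rplus_0_l, Rplus_0_r.
  eapply Rle_trans. apply (RInt_abs_le_int _ (fun x => B * (wte p g e x + wte p g e' x))). lra.
  auto. apply gcont_scal, gcont_plus; apply gcont_wte; lra.
  { intros x Hx. unfold H. rewrite Rabs_mult. apply Rmult_le_compat. apply Rabs_pos. apply Rabs_pos.
    apply HB, clamp_in; lra. pose proof (wte_pos p g e x). pose proof (wte_pos p g e' x).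
    unfold Rabs; destruct Rcase_abs; lra. }
  rewrite RInt_scalR by (apply exR, gcont_plus; apply gcont_wte; lra).
  apply Rmult_le_compat_l; auto.
  rewrite RInt_plusR by (apply exR, gcont_wte; lra).
  pose proof (wint_near p g e Hg (proj1 He) e'). pose proof (wint_near p g e' Hg (ltac:(lra)) e').
  assert (Rpower (e' + e) (1 - g) <= Rpower (2 * e') (1 - g)) by (apply rp_incr; lra).
  assert (Rpower (e' + e') (1 - g) <= Rpower (2 * e') (1 - g)) by (apply rp_incr; lra).
  pose proof C2_pos. unfold C2 in *. nra.
Qed.

Lemma Jw_exists F : cont_within lo hi F -> exists v, islim (Jw lo hi p g F) v.
Proof.
  intros HF.
  destruct (cont_within_bound lo hi F) as [B [B0 HB]]; auto; try lra.
  set (d0 := Rmin (p - lo) (hi - p)). assert (Hd0: 0 < d0) by (apply Rmin_pos; lra).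
  set (K := B * (4 * C2)). assert (K0: 0 <= K) by (unfold K; pose proof C2_pos; nra).
  assert (CB: forall e e', 0 < e < d0 -> 0 < e' < d0 ->
     Rabs (Jw lo hi p g F e - Jw lo hi p g F e') <= K * Rpower (2 * Rmax e e') (1 - g)).
  { intros e e' He He'. unfold K. rewrite Rmult_assoc.
    destruct (Rle_dec e e').
    - rewrite Rmax_right by lra. apply Jw_diff; auto; unfold d0 in *; lra.
    - rewrite Rmax_left by lra. rewrite Rabs_minus_sym. apply Jw_diff; auto; unfold d0 in *; lra. }
  assert (SM: forall eta, 0 < eta -> exists delta, 0 < delta /\ forall m, 0 < m < delta -> K * Rpower (2 * m) (1 - g) < eta).
  { intros eta Heta. destruct (small_rp (1 - g)) with (eta := eta / (K + 1)) as [d [Hd Hs]]. lra.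
    apply Rdiv_lt_0_compat; lra.
    exists (d / 2). split. lra. intros m Hm. specialize (Hs (2 * m) ltac:(lra)).
    assert (K * Rpower (2 * m) (1 - g) <= K * (eta / (K + 1))).
    { apply Rmult_le_compat_l; lra. }
    assert (K * (eta / (K + 1)) < eta).
    { apply (Rmult_lt_reg_r (K + 1)). lra. unfold Rdiv.
      rewrite Rmult_assoc, (Rmult_assoc eta), Rinv_l by lra. nra. }
    lra. }
  set (u := fun n : nat => Jw lo hi p g F (d0 / (INR n + 2))).
  assert (Hu: forall n, 0 < d0 / (INR n + 2) < d0).
  { intros n. pose proof (pos_INR n). split. apply Rdiv_lt_0_compat; lra.
    apply (Rmult_lt_reg_r (INR n + 2)). lra. unfold Rdiv. rewrite Rmult_assoc, Rinv_l by lra. nra. }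
  assert (Hsmall: forall delta, 0 < delta -> exists N, forall n, (n >= N)%nat -> d0 / (INR n + 2) < delta).
  { intros delta Hdel. destruct (INR_archimed delta d0 Hdel) as [N HN]. exists N. intros n Hn.
    apply le_INR in Hn. pose proof (pos_INR N).
    apply (Rmult_lt_reg_r (INR n + 2)). lra. unfold Rdiv. rewrite Rmult_assoc, Rinv_l by lra. nra. }
  assert (Cu: Cauchy_crit u).
  { intros eta Heta. destruct (SM eta Heta) as [d [Hd Hs]].
    destruct (Hsmall d Hd) as [N HN]. exists N. intros n m Hn Hm. unfold Rdist, u.
    eapply Rle_lt_trans. apply CB; auto. apply Hs. split.
    pose proof (Hu n); pose proof (Hu m). eapply Rlt_le_trans; [|apply Rmax_l]. lra.
    unfold Rmax; destruct Rle_dec; [apply HN|apply HN]; auto. }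
  destruct (Rcomplete.R_complete u Cu) as [v Hv].
  exists v. intros eta Heta.
  destruct (SM (eta/2)) as [d [Hd Hs]]. lra.
  destruct (Hv (eta/2)) as [N1 HN1]. lra.
  exists (Rmin d d0). split. apply Rmin_pos; lra.
  intros e He.
  assert (He1: e < d) by (eapply Rlt_le_trans; [apply He| apply Rmin_l]).
  assert (He2: e < d0) by (eapply Rlt_le_trans; [apply He| apply Rmin_r]).
  destruct (Hsmall (d - 0)) as [N2 HN2]. lra.
  set (n := (N1 + N2)%nat).
  specialize (HN1 n ltac:(unfold n; lia)). specialize (HN2 n ltac:(unfold n; lia)).
  unfold Rdist, u in HN1.
  assert (Rabs (Jw lo hi p g F e - Jw lo hi p g F (d0 / (INR n + 2))) < eta / 2).
  { eapply Rle_lt_trans. apply CB. lra. apply Hu. apply Hs. split.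
    eapply Rlt_le_trans; [|apply Rmax_l]. lra.
    unfold Rmax; destruct Rle_dec; lra. }
  replace (Jw lo hi p g F e - v) with ((Jw lo hi p g F e - Jw lo hi p g F (d0 / (INR n + 2))) +
     (Jw lo hi p g F (d0 / (INR n + 2)) - v)) by ring.
  eapply Rle_lt_trans. apply Rabs_triang. lra.
Qed.

Lemma PV_of_lim F v : cont_within lo hi F -> islim (Jw lo hi p g F) v ->
  sing_int (fun x => F x / Rpower (Rabs (p - x)) g) lo hi p v.
Proof.
  intros HF Hv eps Heps.
  destruct (cont_within_bound lo hi F) as [B [B0 HB]]; auto; try lra.
  destruct (Hv (eps / 2)) as [d1 [Hd1 K1]]. lra.
  destruct (small_rp (1 - g)) with (eta := eps / (2 * (2 * B + 1))) as [d2 [Hd2 K2]]. lra.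
  apply Rdiv_lt_0_compat; lra.
  set (d0 := Rmin (p - lo) (hi - p)). assert (Hd0: 0 < d0) by (apply Rmin_pos; lra).
  exists (Rmin (Rmin d1 d2) d0). split. apply Rmin_pos. apply Rmin_pos; auto. auto.
  intros e He.
  assert (Ha: e < d1) by (eapply Rlt_le_trans; [apply He| eapply Rle_trans; [apply Rmin_l|apply Rmin_l]]).
  assert (Hb: e < d2) by (eapply Rlt_le_trans; [apply He| eapply Rle_trans; [apply Rmin_l|apply Rmin_r]]).
  assert (Hc: e < d0) by (eapply Rlt_le_trans; [apply He| apply Rmin_r]).
  assert (M1: e < p - lo) by (eapply Rlt_le_trans; [apply Hc| apply Rmin_l]).
  assert (M2: e < hi - p) by (eapply Rlt_le_trans; [apply Hc| apply Rmin_r]).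
  set (Fw := fun x => F (clamp lo hi x) * wte p g e x).
  assert (GF: gcont Fw) by (apply gcont_Fw; auto; lra).
  set (f := fun x => F x / Rpower (Rabs (p - x)) g).
  assert (E1: forall s t, lo <= s -> t <= hi -> s <= t -> (t <= p - e \/ p + e <= s) ->
     forall x, Rmin s t < x < Rmax s t -> Fw x = f x).
  { intros s t Hs Ht Hst Hside x Hx. rewrite Rmin_left, Rmax_right in Hx by lra.
    unfold Fw, f. rewrite clamp_id by lra. rewrite wte_eq. rewrite Rpower_Ropp. reflexivity.
    destruct Hside. rewrite Rabs_right; lra. rewrite Rabs_left; lra. }
  assert (X1: ex_RInt f lo (p - e)).
  { apply (ex_RInt_ext Fw). apply E1; lra. apply exR; auto. }
  assert (X2: ex_RInt f (p + e) hi).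
  { apply (ex_RInt_ext Fw). apply E1; lra. apply exR; auto. }
  exists (RInt f lo (p - e)), (RInt f (p + e) hi).
  split. exists (ex_RInt_Reals_0 _ _ _ X1). rewrite <- RInt_Reals. reflexivity.
  split. exists (ex_RInt_Reals_0 _ _ _ X2). rewrite <- RInt_Reals. reflexivity.
  rewrite <- (RInt_extR Fw) by (apply E1; lra).
  rewrite <- (RInt_extR Fw f (p + e) hi) by (apply E1; lra).
  assert (EJ: Jw lo hi p g F e = RInt Fw lo (p - e) + RInt Fw (p - e) (p + e) + RInt Fw (p + e) hi).
  { unfold Jw. fold Fw. rewrite RInt_ChaslesR, RInt_ChaslesR; auto; apply exR; auto. }
  specialize (K1 e (conj (proj1 He) Ha)).
  assert (Mid: Rabs (RInt Fw (p - e) (p + e)) <= (2 * e) * (B * Rpower e (-g))).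
  { replace (2 * e) with (p + e - (p - e)) by ring. apply RInt_abs_bound. lra. auto.
    intros x Hx. unfold Fw. rewrite Rabs_mult. rewrite (Rabs_right (wte _ _ _ _)) by (apply Rle_ge, Rlt_le, wte_pos).
    apply Rmult_le_compat. apply Rabs_pos. apply Rlt_le, wte_pos. apply HB, clamp_in; lra.
    apply wte_le_e; lra. }
  assert (Ee: e * Rpower e (-g) = Rpower e (1 - g)).
  { unfold Rminus. rewrite Rpower_plus, Rpower_1 by lra. reflexivity. }
  specialize (K2 e (conj (proj1 He) Hb)).
  assert (2 * e * (B * Rpower e (-g)) <= 2 * B * (eps / (2 * (2 * B + 1)))).
  { replace (2 * e * (B * Rpower e (-g))) with (2 * B * (e * Rpower e (-g))) by ring. rewrite Ee.
    apply Rmult_le_compat_l; lra. }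
  assert (2 * B * (eps / (2 * (2 * B + 1))) < eps / 2).
  { apply (Rmult_lt_reg_r (2 * (2 * B + 1))). lra. unfold Rdiv.
    rewrite Rmult_assoc, (Rmult_assoc eps), Rinv_l by lra. nra. }
  replace (RInt Fw lo (p - e) + RInt Fw (p + e) hi - v) with
    ((Jw lo hi p g F e - v) - RInt Fw (p - e) (p + e)) by (rewrite EJ; ring).
  eapply Rle_lt_trans. apply Rabs_triang. rewrite Rabs_Ropp. lra.
Qed.

End JW.

Lemma is_derive_minusR f g x df dg : is_derive f x df -> is_derive g x dg ->
  is_derive (fun t => f t - g t) x (df - dg).
Proof. intros; apply (is_derive_minus f g); auto. Qed.

Lemma mvi lo hi f df c x B n : lo <= hi -> 0 <= B -> cont_within lo hi f ->
  (forall t, lo < t < hi -> is_derive f t (df t)) -> lo <= c <= hi -> lo <= x <= hi ->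
  (forall t, Rmin c x <= t <= Rmax c x -> Rabs (df t) <= B * Rabs (t - c) ^ n) ->
  Rabs (f x - f c) <= B * Rabs (x - c) ^ (S n).
Proof.
  intros Hlh HB Hf Hd Hc Hx Hb.
  destruct (MVT_gen (fun t => f (clamp lo hi t)) c x df) as [xi [Hxi E]].
  - intros t Ht. apply (is_derive_ext_loc f).
    assert (Ht': lo < t < hi). { unfold Rmin, Rmax in Ht; destruct Rle_dec; lra. }
    assert (Hr: 0 < Rmin (t - lo) (hi - t)) by (apply Rmin_pos; lra).
    exists (mkposreal _ Hr). intros y Hy. simpl. pose proof (Hy : Rabs (y - t) < _) as Hy'.
    rewrite clamp_id; auto.
    assert (Rabs (y - t) < t - lo) by (eapply Rlt_le_trans; [apply Hy'|apply Rmin_l]).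
    assert (Rabs (y - t) < hi - t) by (eapply Rlt_le_trans; [apply Hy'|apply Rmin_r]).
    unfold Rabs in *; destruct Rcase_abs; lra.
    apply Hd. unfold Rmin, Rmax in Ht; destruct Rle_dec; lra.
  - intros t _. apply cont_cont_pt, cont_within_clamp; auto.
  - simpl in E. rewrite !clamp_id in E by auto. rewrite E.
    rewrite Rabs_mult. simpl. rewrite (Rmult_comm (Rabs (x - c))), <- Rmult_assoc.
    apply Rmult_le_compat_r. apply Rabs_pos.
    eapply Rle_trans. apply Hb; auto. apply Rmult_le_compat_l; auto.
    apply pow_incr. split. apply Rabs_pos.
    unfold Rmin, Rmax in Hxi; destruct Rle_dec; unfold Rabs; repeat destruct Rcase_abs; lra.
Qed.

Lemma gcont_poly (f : R -> R) : (forall x, ex_derive f x) -> gcont f.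
Proof. intros H x. apply (ex_derive_continuous (K:=R_AbsRing) (V:=R_NormedModule)). auto. Qed.

Section Taylor.
Variables (lo hi : R) (f0 f1 f2 f3 f4 : R -> R) (K : R).
Hypothesis (Hlh : lo < hi) (HK : 0 <= K).
Hypothesis (C0 : cont_within lo hi f0) (C1 : cont_within lo hi f1)
           (C2 : cont_within lo hi f2) (C3 : cont_within lo hi f3).
Hypothesis (D0 : forall t, lo < t < hi -> is_derive f0 t (f1 t))
           (D1 : forall t, lo < t < hi -> is_derive f1 t (f2 t))
           (D2 : forall t, lo < t < hi -> is_derive f2 t (f3 t))
           (D3 : forall t, lo < t < hi -> is_derive f3 t (f4 t)).
Hypothesis (B4 : forall t, lo <= t <= hi -> Rabs (f4 t) <= K).

Lemma between_in c x t : lo <= c <= hi -> lo <= x <= hi -> Rmin c x <= t <= Rmax c x -> lo <= t <= hi.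
Proof. intros; unfold Rmin, Rmax in *; destruct Rle_dec; lra. Qed.

Lemma taylor3_mvi c x : lo <= c <= hi -> lo <= x <= hi -> Rabs (f3 x - f3 c) <= K * Rabs (x - c).
Proof.
  intros Hc Hx. pose proof (mvi lo hi f3 f4 c x K 0 ltac:(lra) HK C3 D3 Hc Hx).
  simpl in H. rewrite !Rmult_1_r in H. apply H. intros t Ht.
  apply B4. apply (between_in c x t); auto.
Qed.

Lemma taylor4 c x : lo <= c <= hi -> lo <= x <= hi ->
  Rabs (f0 x - (f0 c + f1 c * (x - c) + f2 c / 2 * (x - c) ^ 2 + f3 c / 6 * (x - c) ^ 3)) <= K * Rabs (x - c) ^ 4.
Proof.
  intros Hc Hx.
  set (g3 := fun t => f3 t - f3 c).
  set (g2 := fun t => f2 t - (f2 c + f3 c * (t - c))).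
  set (g1 := fun t => f1 t - (f1 c + f2 c * (t - c) + f3 c / 2 * (t - c) ^ 2)).
  set (g0 := fun t => f0 t - (f0 c + f1 c * (t - c) + f2 c / 2 * (t - c) ^ 2 + f3 c / 6 * (t - c) ^ 3)).
  assert (S3: forall t, lo <= t <= hi -> Rabs (g3 t) <= K * Rabs (t - c) ^ 1).
  { intros t Ht. simpl. rewrite Rmult_1_r. apply taylor3_mvi; auto. }
  assert (S2: forall t, lo <= t <= hi -> Rabs (g2 t) <= K * Rabs (t - c) ^ 2).
  { intros t Ht. replace (g2 t) with (g2 t - g2 c) by (unfold g2; ring).
    apply (mvi lo hi g2 g3 c t K 1); auto; try lra.
    apply cont_within_minus; auto. apply cont_within_of_cont, gcont_poly. intros; auto_derive; auto.
    intros s Hs. unfold g2, g3. apply is_derive_minusR; auto. auto_derive; auto; ring.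
    intros s Hs. apply S3. apply (between_in c t s); auto. }
  assert (S1: forall t, lo <= t <= hi -> Rabs (g1 t) <= K * Rabs (t - c) ^ 3).
  { intros t Ht. replace (g1 t) with (g1 t - g1 c) by (unfold g1; ring).
    apply (mvi lo hi g1 g2 c t K 2); auto; try lra.
    apply cont_within_minus; auto. apply cont_within_of_cont, gcont_poly. intros; auto_derive; auto.
    intros s Hs. unfold g1, g2. apply is_derive_minusR; auto. auto_derive; auto; field.
    intros s Hs. apply S2. apply (between_in c t s); auto. }
  assert (S0: Rabs (g0 x) <= K * Rabs (x - c) ^ 4).
  { replace (g0 x) with (g0 x - g0 c) by (unfold g0; ring).
    apply (mvi lo hi g0 g1 c x K 3); auto; try lra.
    apply cont_within_minus; auto. apply cont_within_of_cont, gcont_poly. intros; auto_derive; auto.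
    intros s Hs. unfold g0, g1. apply is_derive_minusR; auto. auto_derive; auto; field.
    intros s Hs. apply S1. apply (between_in c x s); auto. }
  exact S0.
Qed.
End Taylor.

Definition Psi (t : R) : R := Rmax 0 (1 - Rabs t) * (1 - 2 * Rabs t).
Definition Bub (t : R) : R := Rmax 0 (4 * t * (1 - t)).

Lemma inI_scaled a h u v w : 0 < h ->
  inI (a + u * h) (a + v * h) (a + w * h) = if Rle_dec u w then if Rle_dec w v then true else false else false.
Proof.
  intros Hh. unfold inI.
  destruct (Rle_dec (a + u * h) (a + w * h)) as [H1|H1]; destruct (Rle_dec u w) as [H2|H2].
  - destruct (Rle_dec (a + w * h) (a + v * h)) as [H3|H3]; destruct (Rle_dec w v) as [H4|H4]; auto.
    exfalso; apply H4. apply (Rmult_le_reg_r h); auto. lra.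
    exfalso; apply H3. apply Rplus_le_compat_l, Rmult_le_compat_r; lra.
  - exfalso; apply H2. apply (Rmult_le_reg_r h); auto. lra.
  - exfalso; apply H1. apply Rplus_le_compat_l, Rmult_le_compat_r; lra.
  - auto.
Qed.

Lemma inI_true lo hi x : lo <= x <= hi -> inI lo hi x = true.
Proof. intros H. unfold inI. destruct Rle_dec; [destruct Rle_dec|]; auto; lra. Qed.

Lemma phi_int_closed a h M k t : 0 < h -> 0 <= INR k + t <= INR M ->
  phi_int a h M k (a + (INR k + t) * h) = Psi t.
Proof.
  intros Hh Ht. unfold phi_int, node. cbv zeta.
  rewrite (inI_true a (a + INR M * h)).
  2:{ split. assert (0 <= (INR k + t) * h) by (apply Rmult_le_pos; lra). lra.
      apply Rplus_le_compat_l, Rmult_le_compat_r; lra. }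
  rewrite !inI_scaled by auto. rewrite !Bool.andb_true_r.
  unfold Psi, Rmax, Rabs.
  repeat (destruct Rle_dec); repeat (destruct Rcase_abs); try lra;
  try (assert (t = 0) by lra; subst t; field; lra); field_simplify; try lra; try (field; lra).
Qed.

Lemma phi_bub_closed a h k t : 0 < h ->
  phi_bub a h k (a + (INR k - 1 + t) * h) = Bub t.
Proof.
  intros Hh. unfold phi_bub, node. cbv zeta.
  replace (INR k - 1 + t) with (INR k - 1 + t) by ring.
  replace (a + INR k * h) with (a + INR k * h) by ring.
  rewrite inI_scaled by auto. unfold Bub, Rmax.
  repeat destruct Rle_dec; try (field; lra); try nra.
Qed.

Definition L0 t := (1 - t) * (1 - 2 * t).
Definition L1 t := 4 * t * (1 - t).
Definition L2 t := t * (2 * t - 1).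

Lemma phi_half_even a h M j x : phi_half a h M (2 * j) x = phi_int a h M j x.
Proof. unfold phi_half. rewrite Nat.even_mul, Nat.div2_double. reflexivity. Qed.

Lemma phi_half_odd a h M j x : phi_half a h M (2 * j + 1) x = phi_bub a h (S j) x.
Proof.
  unfold phi_half. replace (Nat.even (2 * j + 1)) with false.
  2:{ rewrite Nat.even_add, Nat.even_mul. simpl. auto. }
  replace (S (2 * j + 1)) with (2 * (S j))%nat by lia. rewrite Nat.div2_double. auto.
Qed.

Section Elem.
Variables (a h : R) (M k : nat) (t : R).
Hypothesis (Hh : 0 < h) (Hk : (k < M)%nat) (Ht : 0 <= t <= 1).
Let x := a + (INR k + t) * h.

Lemma kM : INR k + 1 <= INR M.
Proof. rewrite <- S_INR. apply le_INR. lia. Qed.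

Lemma elem_int j : phi_int a h M j x =
  if Nat.eq_dec j k then L0 t else if Nat.eq_dec j (S k) then L2 t else 0.
Proof.
  unfold x. pose proof kM. pose proof (pos_INR k).
  replace (a + (INR k + t) * h) with (a + (INR j + (INR k - INR j + t)) * h) by ring.
  rewrite phi_int_closed; auto. 2: lra.
  destruct (Nat.eq_dec j k) as [->|Hjk].
  { unfold Psi, L0, Rmax, Rabs. replace (INR k - INR k + t) with t by ring.
    repeat destruct Rle_dec; repeat destruct Rcase_abs; lra || nra. }
  destruct (Nat.eq_dec j (S k)) as [->|Hjk1].
  { rewrite S_INR. unfold Psi, L2, Rmax, Rabs. replace (INR k - (INR k + 1) + t) with (t - 1) by ring.
    repeat destruct Rle_dec; repeat destruct Rcase_abs; try lra; try nra. }
  assert (HH: (j < k)%nat \/ (j > S k)%nat) by lia. destruct HH as [Hl|Hl].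
  - assert (INR j + 1 <= INR k) by (rewrite <- S_INR; apply le_INR; lia).
    unfold Psi, Rmax, Rabs. repeat destruct Rle_dec; repeat destruct Rcase_abs; try lra; try nra.
  - assert (INR k + 2 <= INR j) by (replace 2 with (INR 2) by (simpl; lra); rewrite <- plus_INR; apply le_INR; lia).
    unfold Psi, Rmax, Rabs. repeat destruct Rle_dec; repeat destruct Rcase_abs; try lra; try nra.
Qed.

Lemma elem_bub j : phi_bub a h (S j) x = if Nat.eq_dec j k then L1 t else 0.
Proof.
  unfold x. replace (a + (INR k + t) * h) with (a + (INR (S j) - 1 + (INR k - INR j + t)) * h)
    by (rewrite S_INR; ring).
  rewrite phi_bub_closed; auto.
  destruct (Nat.eq_dec j k) as [->|Hjk].
  { unfold Bub, L1, Rmax. replace (INR k - INR k + t) with t by ring. destruct Rle_dec; nra. }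
  assert (HH: (j < k)%nat \/ (j > k)%nat) by lia. destruct HH as [Hl|Hl].
  - assert (INR j + 1 <= INR k) by (rewrite <- S_INR; apply le_INR; lia).
    unfold Bub, Rmax. destruct Rle_dec; nra.
  - assert (INR k + 1 <= INR j) by (rewrite <- S_INR; apply le_INR; lia).
    unfold Bub, Rmax. destruct Rle_dec; nra.
Qed.

Lemma elem_phi l : phi_half a h M l x =
  if Nat.eq_dec l (2 * k) then L0 t else if Nat.eq_dec l (2 * k + 1) then L1 t
  else if Nat.eq_dec l (2 * k + 2) then L2 t else 0.
Proof.
  destruct (Nat.Even_or_Odd l) as [[j ->]|[j ->]].
  - rewrite phi_half_even, elem_int.
    destruct (Nat.eq_dec j k); destruct (Nat.eq_dec (2 * j) (2 * k)); try lia; auto.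
    destruct (Nat.eq_dec (2 * j) (2 * k + 1)); try lia.
    destruct (Nat.eq_dec j (S k)); destruct (Nat.eq_dec (2 * j) (2 * k + 2)); try lia; auto.
  - rewrite phi_half_odd, elem_bub.
    destruct (Nat.eq_dec (2 * j + 1) (2 * k)); try lia.
    destruct (Nat.eq_dec j k); destruct (Nat.eq_dec (2 * j + 1) (2 * k + 1)); try lia; auto.
    destruct (Nat.eq_dec (2 * j + 1) (2 * k + 2)); try lia; auto.
Qed.
End Elem.

Lemma sum_three_gen (f : nat -> R) N j :
  (forall l, (l <= N)%nat -> l <> j -> l <> S j -> l <> S (S j) -> f l = 0) ->
  forall n, (n <= N)%nat -> sum_f_R0 f n =
    (if Compare_dec.le_dec j n then f j else 0) + (if Compare_dec.le_dec (S j) n then f (S j) else 0) +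
    (if Compare_dec.le_dec (S (S j)) n then f (S (S j)) else 0).
Proof.
  intros Hz n. induction n; intros Hn.
  - simpl. destruct (Compare_dec.le_dec j 0); destruct (Compare_dec.le_dec (S j) 0); destruct (Compare_dec.le_dec (S (S j)) 0); try lia.
    assert (j = 0)%nat by lia. subst. lra.
    rewrite Hz; lia || lra.
  - simpl sum_f_R0. rewrite IHn by lia.
    destruct (Nat.eq_dec (S n) j) as [E|E].
    { subst j. destruct (Compare_dec.le_dec (S n) n); destruct (Compare_dec.le_dec (S n) (S n)); destruct (Compare_dec.le_dec (S (S n)) n);
      destruct (Compare_dec.le_dec (S (S n)) (S n)); destruct (Compare_dec.le_dec (S (S (S n))) n); destruct (Compare_dec.le_dec (S (S (S n))) (S n)); try lia; lra. }
    destruct (Nat.eq_dec (S n) (S j)) as [E1|E1].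
    { injection E1 as E1. subst j. destruct (Compare_dec.le_dec n n); destruct (Compare_dec.le_dec n (S n)); destruct (Compare_dec.le_dec (S n) n);
      destruct (Compare_dec.le_dec (S n) (S n)); destruct (Compare_dec.le_dec (S (S n)) n); destruct (Compare_dec.le_dec (S (S n)) (S n)); try lia; lra. }
    destruct (Nat.eq_dec (S n) (S (S j))) as [E2|E2].
    { assert (n = S j) by lia. subst n. destruct (Compare_dec.le_dec j (S j)); destruct (Compare_dec.le_dec j (S (S j))); destruct (Compare_dec.le_dec (S j) (S j));
      destruct (Compare_dec.le_dec (S j) (S (S j))); destruct (Compare_dec.le_dec (S (S j)) (S j)); destruct (Compare_dec.le_dec (S (S j)) (S (S j))); try lia; lra. }
    rewrite (Hz (S n)) by lia.
    destruct (Compare_dec.le_dec j n); destruct (Compare_dec.le_dec j (S n)); try lia;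
    destruct (Compare_dec.le_dec (S j) n); destruct (Compare_dec.le_dec (S j) (S n)); try lia;
    destruct (Compare_dec.le_dec (S (S j)) n); destruct (Compare_dec.le_dec (S (S j)) (S n)); try lia; lra.
Qed.

Lemma sum_three (f : nat -> R) n j : (j + 2 <= n)%nat ->
  (forall l, (l <= n)%nat -> l <> j -> l <> S j -> l <> S (S j) -> f l = 0) ->
  sum_f_R0 f n = f j + f (S j) + f (S (S j)).
Proof.
  intros Hjn Hz. rewrite (sum_three_gen f n j Hz n) by lia.
  destruct (Compare_dec.le_dec j n); destruct (Compare_dec.le_dec (S j) n); destruct (Compare_dec.le_dec (S (S j)) n); try lia. ring.
Qed.

Definition Interp (a h : R) (M : nat) (v : nat -> R) (x : R) : R :=
  sum_f_R0 (fun l => phi_half a h M l x * v l) (2 * M).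

Lemma Interp_elem a h M k t v : 0 < h -> (k < M)%nat -> 0 <= t <= 1 ->
  Interp a h M v (a + (INR k + t) * h) = v (2 * k)%nat * L0 t + v (2 * k + 1)%nat * L1 t + v (2 * k + 2)%nat * L2 t.
Proof.
  intros Hh Hk Ht. unfold Interp. rewrite (sum_three _ _ (2 * k)); try lia.
  - rewrite !elem_phi; auto.
    destruct (Nat.eq_dec (2 * k) (2 * k)); try lia.
    destruct (Nat.eq_dec (S (2 * k)) (2 * k)); try lia.
    destruct (Nat.eq_dec (S (2 * k)) (2 * k + 1)); try lia.
    destruct (Nat.eq_dec (S (S (2 * k))) (2 * k)); try lia.
    destruct (Nat.eq_dec (S (S (2 * k))) (2 * k + 1)); try lia.
    destruct (Nat.eq_dec (S (S (2 * k))) (2 * k + 2)); try lia.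
    replace (S (2 * k)) with (2 * k + 1)%nat by lia. replace (S (S (2 * k))) with (2 * k + 2)%nat by lia. replace (S (2 * k + 1)) with (2 * k + 2)%nat by lia. ring.
  - intros l Hl H1 H2 H3. rewrite elem_phi; auto.
    destruct (Nat.eq_dec l (2 * k)); try lia.
    destruct (Nat.eq_dec l (2 * k + 1)); try lia.
    destruct (Nat.eq_dec l (2 * k + 2)); try lia. ring.
Qed.

Lemma gcont_max0 f : gcont f -> gcont (fun x => Rmax 0 (f x)).
Proof.
  intros H. apply (gcont_ext (fun x => (f x + Rabs (f x)) / 2)).
  intros x. unfold Rmax, Rabs; destruct Rle_dec; destruct Rcase_abs; lra.
  apply (gcont_ext (fun x => / 2 * (f x + Rabs (f x)))). intros; unfold Rdiv; ring.
  apply gcont_scal, gcont_plus; auto. apply gcont_abs; auto.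
Qed.

Lemma gcont_aff (h a c : R) : gcont (fun x => (x - a) / h - c).
Proof.
  apply (gcont_ext (fun x => / h * (x + - a) + - c)). intros; unfold Rdiv, Rminus; ring.
  apply gcont_plus. apply gcont_scal, gcont_plus. apply gcont_id. apply gcont_const. apply gcont_const.
Qed.

Lemma gcont_Psi_aff h a c : gcont (fun x => Psi ((x - a) / h - c)).
Proof.
  unfold Psi. apply gcont_mult. apply gcont_max0. apply gcont_minus. apply gcont_const.
  apply gcont_abs, gcont_aff. apply gcont_minus. apply gcont_const. apply gcont_scal, gcont_abs, gcont_aff.
Qed.

Lemma gcont_Bub_aff h a c : gcont (fun x => Bub ((x - a) / h - c)).
Proof.
  unfold Bub. apply gcont_max0. apply gcont_mult. apply gcont_scal, gcont_aff.
  apply gcont_minus. apply gcont_const. apply gcont_aff.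
Qed.

Lemma phi_int_closed_x a h M k x : 0 < h -> a <= x <= a + INR M * h ->
  phi_int a h M k x = Psi ((x - a) / h - INR k).
Proof.
  intros Hh Hx. replace x with (a + (INR k + ((x - a) / h - INR k)) * h) at 1 by (field; lra).
  apply phi_int_closed; auto. split.
  - replace (INR k + ((x - a) / h - INR k)) with ((x - a) / h) by ring.
    apply Rmult_le_pos. lra. apply Rlt_le, Rinv_0_lt_compat; auto.
  - replace (INR k + ((x - a) / h - INR k)) with ((x - a) / h) by ring.
    apply (Rmult_le_reg_r h); auto. unfold Rdiv. rewrite Rmult_assoc, Rinv_l by lra. lra.
Qed.

Lemma phi_bub_closed_x a h k x : 0 < h -> phi_bub a h k x = Bub ((x - a) / h - (INR k - 1)).
Proof.
  intros Hh. replace x with (a + (INR k - 1 + ((x - a) / h - (INR k - 1))) * h) at 1 by (field; lra).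
  apply phi_bub_closed; auto.
Qed.

Lemma phi_half_cont a h M l : 0 < h -> cont_within a (a + INR M * h) (phi_half a h M l).
Proof.
  intros Hh. destruct (Nat.Even_or_Odd l) as [[j ->]|[j ->]].
  - apply (cont_within_ext _ _ (fun x => Psi ((x - a) / h - INR j))).
    intros x Hx. rewrite phi_half_even, phi_int_closed_x; auto.
    apply cont_within_of_cont, gcont_Psi_aff.
  - apply (cont_within_ext _ _ (fun x => Bub ((x - a) / h - (INR (S j) - 1)))).
    intros x Hx. rewrite phi_half_odd, phi_bub_closed_x; auto.
    apply cont_within_of_cont, gcont_Bub_aff.
Qed.

Lemma Interp_cont a h M v : 0 < h -> cont_within a (a + INR M * h) (Interp a h M v).
Proof.
  intros Hh. unfold Interp. apply cont_within_sum. intros l _.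
  apply (cont_within_ext _ _ (fun x => v l * phi_half a h M l x)). intros; ring.
  apply cont_within_scal, phi_half_cont; auto.
Qed.

Lemma elem_exists (M : nat) s : (1 <= M)%nat -> 0 <= s <= INR M ->
  exists k, (k < M)%nat /\ INR k <= s <= INR k + 1.
Proof.
  intros HM. induction M as [|M IH]; [lia|]. intros Hs.
  destruct (Rle_dec s (INR M)) as [H|H].
  - destruct M. exists 0%nat. simpl in *. split. lia. lra.
    destruct IH as [k [Hk Hk']]. lia. lra. exists k. split. lia. auto.
  - exists M. split. lia. rewrite S_INR in Hs. lra.
Qed.

Lemma x_elem a h M x : 0 < h -> (1 <= M)%nat -> a <= x <= a + INR M * h ->
  exists k t, (k < M)%nat /\ 0 <= t <= 1 /\ x = a + (INR k + t) * h.
Proof.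
  intros Hh HM Hx. destruct (elem_exists M ((x - a) / h) HM) as [k [Hk Hk']].
  - split. apply Rmult_le_pos. lra. apply Rlt_le, Rinv_0_lt_compat; auto.
    apply (Rmult_le_reg_r h); auto. unfold Rdiv. rewrite Rmult_assoc, Rinv_l by lra. lra.
  - exists k, ((x - a) / h - INR k). split; auto. split. lra. field. lra.
Qed.

Lemma L_bounds t : 0 <= t <= 1 -> Rabs (L0 t) <= 1 /\ Rabs (L1 t) <= 1 /\ Rabs (L2 t) <= 1.
Proof.
  intros Ht. pose proof (pow2_ge_0 (2*t-1)). unfold L0, L1, L2. split; [|split]; unfold Rabs; destruct Rcase_abs; nra.
Qed.

Lemma Interp_bound a h M v Z x : 0 < h -> (1 <= M)%nat -> a <= x <= a + INR M * h ->
  (forall l, (l <= 2 * M)%nat -> Rabs (v l) <= Z) -> Rabs (Interp a h M v x) <= 3 * Z.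
Proof.
  intros Hh HM Hx HZ. destruct (x_elem a h M x Hh HM Hx) as [k [t [Hk [Ht ->]]]].
  rewrite Interp_elem; auto. destruct (L_bounds t Ht) as [B0 [B1 B2]].
  pose proof (HZ (2 * k)%nat ltac:(lia)). pose proof (HZ (2 * k + 1)%nat ltac:(lia)).
  pose proof (HZ (2 * k + 2)%nat ltac:(lia)).
  eapply Rle_trans. apply Rabs_triang. eapply Rle_trans. apply Rplus_le_compat_r, Rabs_triang.
  rewrite !Rabs_mult.
  assert (0 <= Z) by (eapply Rle_trans; [apply Rabs_pos| apply H]).
  pose proof (Rabs_pos (v (2*k)%nat)). pose proof (Rabs_pos (v (2*k+1)%nat)). pose proof (Rabs_pos (v (2*k+2)%nat)).
  pose proof (Rabs_pos (L0 t)). pose proof (Rabs_pos (L1 t)). pose proof (Rabs_pos (L2 t)).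
  nra.
Qed.

Lemma Interp_linear a h M v w x : Interp a h M (fun l => v l - w l) x = Interp a h M v x - Interp a h M w x.
Proof.
  unfold Interp. rewrite <- minus_sum. apply sum_eq. intros; ring.
Qed.

Fixpoint sumk (f : nat -> R) (n : nat) : R :=
  match n with O => 0 | S n => sumk f n + f n end.

Lemma sumk_ext f g n : (forall k, (k < n)%nat -> f k = g k) -> sumk f n = sumk g n.
Proof. induction n; intros H; simpl; auto. rewrite IHn, H; auto; intros; apply H; lia. Qed.

Lemma sumk_plus f g n : sumk (fun k => f k + g k) n = sumk f n + sumk g n.
Proof. induction n; simpl; [ring| rewrite IHn; ring]. Qed.

Lemma sumk_scal c f n : sumk (fun k => c * f k) n = c * sumk f n.
Proof. induction n; simpl; [ring| rewrite IHn; ring]. Qed.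

Lemma sumk_abs f n : Rabs (sumk f n) <= sumk (fun k => Rabs (f k)) n.
Proof. induction n; simpl. rewrite Rabs_R0; lra. eapply Rle_trans. apply Rabs_triang. lra. Qed.

Lemma sumk_le f g n : (forall k, (k < n)%nat -> f k <= g k) -> sumk f n <= sumk g n.
Proof. induction n; intros H; simpl. lra. apply Rplus_le_compat. apply IHn; intros; apply H; lia. apply H; lia. Qed.

Lemma sumk_split f n m : sumk f (n + m) = sumk f n + sumk (fun j => f (n + j)%nat) m.
Proof. induction m; simpl. rewrite Nat.add_0_r; ring. rewrite Nat.add_succ_r. simpl. rewrite IHm. ring. Qed.

Lemma sumk_shift f n : sumk f (S n) = f 0%nat + sumk (fun k => f (S k)) n.
Proof. induction n. simpl; ring. simpl sumk in *. rewrite IHn. ring. Qed.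

Lemma sumk_rev f n : sumk f n = sumk (fun k => f (n - 1 - k)%nat) n.
Proof.
  induction n. reflexivity.
  simpl sumk at 1. rewrite IHn. rewrite sumk_shift.
  replace (S n - 1 - 0)%nat with n by lia.
  rewrite (sumk_ext (fun k => f (n - 1 - k)%nat) (fun k => f (S n - 1 - S k)%nat)). ring.
  intros; f_equal; lia.
Qed.

Lemma sumk_antisym f n : (forall k, (k < n)%nat -> f (n - 1 - k)%nat = - f k) -> sumk f n = 0.
Proof.
  intros H. assert (sumk f n = - sumk f n).
  { rewrite sumk_rev at 1. replace (- sumk f n) with ((-1) * sumk f n) by ring.
    rewrite <- sumk_scal. apply sumk_ext. intros k Hk. rewrite H; auto. ring. }
  lra.
Qed.

Lemma sumk_nonneg f n : (forall k, (k < n)%nat -> 0 <= f k) -> 0 <= sumk f n.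
Proof. intros H. replace 0 with (sumk (fun _ => 0) n). apply sumk_le; auto. induction n; simpl; auto. rewrite IHn; auto; lra. Qed.

Lemma RInt_sumk F a h n : gcont F ->
  RInt F a (a + INR n * h) = sumk (fun k => RInt F (a + INR k * h) (a + INR (S k) * h)) n.
Proof.
  intros HF. induction n; cbn [sumk].
  - simpl. rewrite Rmult_0_l, Rplus_0_r. rewrite RInt_point. reflexivity.
  - rewrite <- IHn. rewrite RInt_ChaslesR; auto; apply exR; auto.
Qed.

Lemma far_tele g h eta n : 0 < g -> 0 < h -> h / 2 <= eta ->
  sumk (fun j => h * g * Rpower (eta + INR j * h) (-(g+1))) n <= Rpower 3 (g+1) * Rpower eta (-g).
Proof.
  intros Hg Hh He.
  assert (forall n, sumk (fun j => h * g * Rpower (eta + INR j * h) (-(g+1))) n <=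
     Rpower 3 (g+1) * (Rpower eta (-g) - Rpower (eta + INR n * h) (-g))).
  { induction n0; simpl sumk. simpl. rewrite Rmult_0_l, Rplus_0_r. lra.
    pose proof (rp_tele g (eta + INR n0 * h) h Hg Hh). rewrite S_INR.
    replace (eta + INR n0 * h + h) with (eta + (INR n0 + 1) * h) in H by ring.
    assert (h / 2 <= eta + INR n0 * h). { pose proof (pos_INR n0). nra. }
    specialize (H H0). lra. }
  eapply Rle_trans. apply H. pose proof (Rpower_pos (eta + INR n * h) (-g)).
  pose proof (Rpower_pos 3 (g+1)). nra.
Qed.

Definition omega (al h x : R) : R := (x - al) * (x - al - h / 2) * (x - al - h).

Lemma gcont_omega al h : gcont (omega al h).
Proof. apply gcont_poly. intros; unfold omega; auto_derive; auto. Qed.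

Lemma omega_int0 al h : RInt (omega al h) al (al + h) = 0.
Proof.
  assert (H: is_RInt (omega al h) al (al + h)
     (minus ((fun x => ((x - al) * (x - al - h)) ^ 2 / 4) (al + h))
            ((fun x => ((x - al) * (x - al - h)) ^ 2 / 4) al))).
  { apply (is_RInt_derive (V:=R_CompleteNormedModule) (fun x => ((x - al) * (x - al - h)) ^ 2 / 4) (omega al h)).
    - intros x _. unfold omega. auto_derive; auto. simpl. field.
    - intros x _. apply gcont_omega. }
  apply (is_RInt_unique (V:=R_CompleteNormedModule)) in H. rewrite H. simpl. unfold minus, plus, opp; simpl. field.
Qed.

Lemma omega_bound al h x : 0 < h -> al <= x <= al + h -> Rabs (omega al h x) <= h ^ 3 / 8.
Proof.
  intros Hh Hx. unfold omega.
  replace ((x - al) * (x - al - h / 2) * (x - al - h)) with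
    ((x - al - h / 2) * ((x - al - h / 2) ^ 2 - h ^ 2 / 4)) by field.
  assert (Hu: - (h / 2) <= x - al - h / 2 <= h / 2) by lra.
  rewrite Rabs_mult.
  assert (Rabs (x - al - h / 2) <= h / 2) by (apply Rabs_le; lra).
  assert (Rabs ((x - al - h / 2) ^ 2 - h ^ 2 / 4) <= h ^ 2 / 4).
  { assert (0 <= (h/2 - (x - al - h / 2)) * (h/2 + (x - al - h / 2))) by (apply Rmult_le_pos; lra).
    pose proof (pow2_ge_0 (x - al - h / 2)).
    apply Rabs_le. split; nra. }
  replace (h ^ 3 / 8) with ((h / 2) * (h ^ 2 / 4)) by field.
  apply Rmult_le_compat; auto; apply Rabs_pos.
Qed.

Section TT.
Variables (p g e h : R).
Hypothesis (Hg : 0 < g < 1) (He : 0 < e) (Hh : 0 < h).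

Definition T (al : R) := RInt (fun x => omega al h x * wte p g e x) al (al + h).

Lemma gcont_ow al : gcont (fun x => omega al h x * wte p g e x).
Proof. apply gcont_mult. apply gcont_omega. apply gcont_wte; auto. Qed.

Lemma T_bound1 al : Rabs (T al) <= h ^ 3 / 8 * RInt (wte p g e) al (al + h).
Proof.
  unfold T. rewrite <- RInt_scalR by (apply exR, gcont_wte; auto).
  apply RInt_abs_le_int. lra. apply gcont_ow. apply gcont_scal, gcont_wte; auto.
  intros x Hx. rewrite Rabs_mult, (Rabs_right (wte _ _ _ _)) by (apply Rle_ge, Rlt_le, wte_pos).
  apply Rmult_le_compat_r. apply Rlt_le, wte_pos. apply omega_bound; auto.
Qed.

Lemma T_bound2 al d : 0 < d -> e <= d -> (forall x, al <= x <= al + h -> d <= Rabs (p - x)) ->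
  Rabs (T al) <= h ^ 5 / 16 * g * Rpower d (-(g+1)).
Proof.
  intros Hd Hed Hdist.
  set (c := al + h / 2). set (wc := wte p g e c).
  assert (E: T al = RInt (fun x => omega al h x * (wte p g e x - wc)) al (al + h)).
  { unfold T. 
    replace (RInt (fun x => omega al h x * (wte p g e x - wc)) al (al + h)) with
      (RInt (fun x => omega al h x * wte p g e x) al (al + h) - wc * RInt (omega al h) al (al + h)).
    rewrite omega_int0, Rmult_0_r, Rminus_0_r. reflexivity.
    rewrite <- RInt_scalR by (apply exR, gcont_omega). rewrite <- RInt_minusR.
    apply RInt_extR. intros; ring. apply exR, gcont_ow.
    apply exR, gcont_scal, gcont_omega. }
  rewrite E.
  replace (h ^ 5 / 16 * g * Rpower d (-(g+1))) with ((al + h - al) * (h ^ 3 / 8 * (g * Rpower d (-(g+1)) * (h / 2)))) by field.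
  apply RInt_abs_bound. lra. apply gcont_mult. apply gcont_omega. apply gcont_minus. apply gcont_wte; auto. apply gcont_const.
  intros x Hx. rewrite Rabs_mult. apply Rmult_le_compat. apply Rabs_pos. apply Rabs_pos.
  apply omega_bound; auto.
  unfold wc. rewrite !wte_eq. 
  eapply Rle_trans. apply (rp_lip g d); try lra. apply Hdist; auto. apply Hdist; unfold c; lra.
  apply Rmult_le_compat_l. apply Rmult_le_pos. lra. apply Rlt_le, Rpower_pos.
  eapply Rle_trans. apply Rabs_triang_inv2. 
  replace (p - x - (p - c)) with (c - x) by ring. unfold c. apply Rabs_le. lra.
  eapply Rle_trans; [apply Hed| apply Hdist; unfold c; lra].
  eapply Rle_trans; [apply Hed| apply Hdist; lra].
Qed.

Lemma T_mirror al : T (2 * p - al - h) = - T al.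
Proof.
  set (al' := 2 * p - al - h).
  set (f := fun x => omega al' h x * wte p g e x).
  assert (Xf: forall s t, ex_RInt f s t) by (intros; apply exR, gcont_ow).
  
  assert (H1: RInt f (al' + h) al' = - RInt f al' (al' + h)).
  { rewrite <- (opp_RInt_swap f al' (al' + h)) by auto. reflexivity. }
  
  assert (H2: RInt (fun y => scal (-1) (f (-1 * y + 2 * p))) al (al + h) = RInt f (al' + h) al').
  { pose proof (RInt_comp_lin f (-1) (2 * p) al (al + h) (Xf _ _)) as Hc.
    replace (-1 * al + 2 * p) with (al' + h) in Hc by (unfold al'; ring).
    replace (-1 * (al + h) + 2 * p) with al' in Hc by (unfold al'; ring). exact Hc. }
  assert (H3: RInt (fun y => scal (-1) (f (-1 * y + 2 * p))) al (al + h) = T al).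
  { unfold T. apply RInt_extR. intros x _.  unfold f. change (scal (-1) ?z) with ((-1) * z). 
    replace (-1 * x + 2 * p) with (2 * p - x) by ring.  rewrite wte_sym.
    unfold omega, al'. field. }
  
  change (RInt f al' (al' + h) = - T al). rewrite <- H3, H2, H1. rewrite Ropp_involutive. reflexivity.
Qed.

Lemma wte_int_lower al D : 0 < D -> e <= D -> (forall x, al <= x <= al + h -> Rabs (p - x) <= D) ->
  h * Rpower D (-g) <= RInt (wte p g e) al (al + h).
Proof.
  intros HD HeD Hx.
  assert (E: RInt (fun _ => Rpower D (-g)) al (al + h) = h * Rpower D (-g)) by (rewrite RInt_constR; simpl; ring).
  rewrite <- E.
  apply RInt_leR. lra. apply gcont_const. apply gcont_wte; auto.
  intros x Hxx. unfold wte. apply rp_decr. lra. split. apply Rmax_pos_l; auto.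
  pose proof (Hx x Hxx). unfold Rmax; destruct Rle_dec; lra.
Qed.
End TT.

Section Main1D.
Variables (a b g : R).
Hypothesis (Hab : a < b) (Hg : 0 < g < 1).
Variables (f0 f1 f2 f3 f4 : R -> R) (K3 K4 : R).
Hypothesis (C0 : cont_within a b f0) (C1 : cont_within a b f1)
           (C2' : cont_within a b f2) (C3 : cont_within a b f3).
Hypothesis (D0 : forall t, a < t < b -> is_derive f0 t (f1 t))
           (D1 : forall t, a < t < b -> is_derive f1 t (f2 t))
           (D2 : forall t, a < t < b -> is_derive f2 t (f3 t))
           (D3 : forall t, a < t < b -> is_derive f3 t (f4 t)).
Hypothesis (B3 : forall t, a <= t <= b -> Rabs (f3 t) <= K3)
           (B4 : forall t, a <= t <= b -> Rabs (f4 t) <= K4).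

Lemma K4_pos : 0 <= K4.
Proof. eapply Rle_trans. apply Rabs_pos. apply (B4 a). lra. Qed.
Lemma K3_pos : 0 <= K3.
Proof. eapply Rle_trans. apply Rabs_pos. apply (B3 a). lra. Qed.

Lemma elem_taylor al h x : 0 < h -> a <= al -> al + h <= b -> al <= x <= al + h ->
  Rabs (f0 x - (f0 al * L0 ((x - al) / h) + f0 (al + h / 2) * L1 ((x - al) / h) + f0 (al + h) * L2 ((x - al) / h))
        - f3 (al + h / 2) / 6 * omega al h x) <= K4 * h ^ 4 / 4.
Proof.
  intros Hh Ha Hb Hx.
  set (c := al + h / 2).
  set (P := fun y => f0 c + f1 c * (y - c) + f2 c / 2 * (y - c) ^ 2 + f3 c / 6 * (y - c) ^ 3).
  set (Rm := fun y => f0 y - P y).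
  set (t := (x - al) / h).
  assert (Hxt: x = al + t * h) by (unfold t; field; lra).
  assert (Ht: 0 <= t <= 1).
  { unfold t; split. apply Rmult_le_pos. lra. apply Rlt_le, Rinv_0_lt_compat; auto.
    apply (Rmult_le_reg_r h); auto. unfold Rdiv. rewrite Rmult_assoc, Rinv_l by lra. lra. }
  assert (Id: P x - (P al * L0 t + P c * L1 t + P (al + h) * L2 t) = f3 c / 6 * omega al h x).
  { rewrite Hxt. unfold P, c, L0, L1, L2, omega. field. }
  assert (RB: forall y, al <= y <= al + h -> Rabs (Rm y) <= K4 * (h / 2) ^ 4).
  { intros y Hy. unfold Rm, P.
    eapply Rle_trans. apply (taylor4 a b f0 f1 f2 f3 f4 K4 Hab K4_pos C0 C1 C2' C3 D0 D1 D2 D3 B4 c y).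
    unfold c; lra. lra.
    apply Rmult_le_compat_l. apply K4_pos. apply pow_incr. split. apply Rabs_pos.
    apply Rabs_le. unfold c; lra. }
  replace (f0 x - (f0 al * L0 t + f0 c * L1 t + f0 (al + h) * L2 t) - f3 c / 6 * omega al h x)
    with (Rm x - (Rm al * L0 t + Rm c * L1 t + Rm (al + h) * L2 t)).
  2:{ unfold Rm. fold c. rewrite <- Id. ring. }
  destruct (L_bounds t Ht) as [L0b [L1b L2b]].
  pose proof (RB x Hx). pose proof (RB al ltac:(lra)). pose proof (RB c ltac:(unfold c; lra)).
  pose proof (RB (al + h) ltac:(lra)).
  assert (Hq: 0 <= K4 * (h / 2) ^ 4) by (apply Rmult_le_pos; [apply K4_pos| apply pow_le; lra]).
  assert (Rabs (Rm x - (Rm al * L0 t + Rm c * L1 t + Rm (al + h) * L2 t)) <=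
          Rabs (Rm x) + (Rabs (Rm al) * Rabs (L0 t) + Rabs (Rm c) * Rabs (L1 t) + Rabs (Rm (al + h)) * Rabs (L2 t))).
  { eapply Rle_trans. apply Rabs_triang. rewrite Rabs_Ropp. apply Rplus_le_compat_l.
    eapply Rle_trans. apply Rabs_triang. rewrite Rabs_mult. apply Rplus_le_compat_r.
    eapply Rle_trans. apply Rabs_triang. rewrite !Rabs_mult. lra. }
  assert (Rabs (Rm al) * Rabs (L0 t) <= K4 * (h / 2) ^ 4)
    by (apply Rle_trans with (K4 * (h / 2) ^ 4 * 1); [apply Rmult_le_compat; try apply Rabs_pos; auto| lra]).
  assert (Rabs (Rm c) * Rabs (L1 t) <= K4 * (h / 2) ^ 4)
    by (apply Rle_trans with (K4 * (h / 2) ^ 4 * 1); [apply Rmult_le_compat; try apply Rabs_pos; auto| lra]).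
  assert (Rabs (Rm (al + h)) * Rabs (L2 t) <= K4 * (h / 2) ^ 4)
    by (apply Rle_trans with (K4 * (h / 2) ^ 4 * 1); [apply Rmult_le_compat; try apply Rabs_pos; auto| lra]).
  replace (K4 * h ^ 4 / 4) with (4 * (K4 * (h / 2) ^ 4)) by field. lra.
Qed.


Variables (M : nat) (h p e : R).
Hypothesis (HM : (1 <= M)%nat) (Hh : 0 < h) (HbM : b = a + INR M * h) (Hp : a <= p <= b) (He : 0 < e <= h / 2).

Definition Eint (x : R) := f0 x - Interp a h M (fun l => f0 (hnode a h l)) x.

Lemma Eint_cont : cont_within a b Eint.
Proof. unfold Eint. apply cont_within_minus; auto. rewrite HbM. apply Interp_cont; auto. Qed.

Definition Fw (x : R) := Eint (clamp a b x) * wte p g e x.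

Lemma gcont_Fw1 : gcont Fw.
Proof. unfold Fw. apply gcont_mult. apply gcont_clamp. lra. apply Eint_cont. apply gcont_wte; lra. Qed.

Lemma E_elem k x : (k < M)%nat -> a + INR k * h <= x <= a + INR k * h + h ->
  Eint x = f0 x - (f0 (a + INR k * h) * L0 ((x - (a + INR k * h)) / h) +
                    f0 (a + INR k * h + h / 2) * L1 ((x - (a + INR k * h)) / h) +
                    f0 (a + INR k * h + h) * L2 ((x - (a + INR k * h)) / h)).
Proof.
  intros Hk Hx. unfold Eint. f_equal.
  set (t := (x - (a + INR k * h)) / h).
  assert (Hxt: x = a + (INR k + t) * h) by (unfold t; field; lra).
  assert (Ht: 0 <= t <= 1).
  { unfold t; split. apply Rmult_le_pos. lra. apply Rlt_le, Rinv_0_lt_compat; auto.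
    apply (Rmult_le_reg_r h); auto. unfold Rdiv. rewrite Rmult_assoc, Rinv_l by lra. lra. }
  rewrite Hxt at 1. rewrite Interp_elem; auto.
  unfold hnode, node.
  assert (N0: a + INR (2 * k) / 2 * h = a + INR k * h) by (rewrite mult_INR; simpl; field).
  assert (N1: a + INR (2 * k + 1) / 2 * h = a + INR k * h + h / 2) by (rewrite plus_INR, mult_INR; simpl; field).
  assert (N2: a + INR (2 * k + 2) / 2 * h = a + INR k * h + h) by (rewrite plus_INR, mult_INR; simpl; field).
  rewrite N0, N1, N2. reflexivity.
Qed.

Lemma elem_integral k : (k < M)%nat ->
  Rabs (RInt Fw (a + INR k * h) (a + INR k * h + h) - f3 p / 6 * T p g e h (a + INR k * h))
    <= K4 * h ^ 4 * RInt (wte p g e) (a + INR k * h) (a + INR k * h + h).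
Proof.
  intros Hk. set (al := a + INR k * h). set (c := al + h / 2).
  assert (Hal: a <= al) by (unfold al; pose proof (pos_INR k); nra).
  assert (Hbl: al + h <= b).
  { unfold al. rewrite HbM. assert (INR k + 1 <= INR M) by (rewrite <- S_INR; apply le_INR; lia). nra. }
  assert (Gw: gcont (wte p g e)) by (apply gcont_wte; lra).
  assert (Go: gcont (fun x => omega al h x * wte p g e x)) by (apply gcont_ow; lra).
  set (G := fun x => (Eint (clamp a b x) - f3 c / 6 * omega al h x) * wte p g e x).
  assert (GG: gcont G).
  { unfold G. apply gcont_mult. apply gcont_minus. apply gcont_clamp. lra. apply Eint_cont.
    apply gcont_scal, gcont_omega. auto. }
  assert (Split: RInt Fw al (al + h) - f3 p / 6 * T p g e h al =
      RInt G al (al + h) + (f3 c - f3 p) / 6 * T p g e h al).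
  { unfold T. rewrite <- !RInt_scalR by (apply exR; auto).
    rewrite <- RInt_minusR by (apply exR; first [apply gcont_Fw1| apply gcont_scal; auto]).
    rewrite <- RInt_plusR by (apply exR; first [apply gcont_scal; auto | auto]).
    apply RInt_extR. intros x _. unfold Fw, G. field. }
  rewrite Split.
  assert (IW: 0 <= RInt (wte p g e) al (al + h)).
  { apply RInt_nonneg. lra. auto. intros; apply Rlt_le, wte_pos. }
  assert (P1: Rabs (RInt G al (al + h)) <= K4 * h ^ 4 / 4 * RInt (wte p g e) al (al + h)).
  { rewrite <- RInt_scalR by (apply exR; auto). apply RInt_abs_le_int. lra. auto.
    apply gcont_scal; auto.
    intros x Hx. unfold G. rewrite Rabs_mult, (Rabs_right (wte _ _ _ _)) by (apply Rle_ge, Rlt_le, wte_pos).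
    apply Rmult_le_compat_r. apply Rlt_le, wte_pos.
    rewrite clamp_id by lra. rewrite (E_elem k) by (auto; unfold al in Hx; lra). fold al.
    unfold c. apply elem_taylor; auto; lra. }
  assert (Hc: a <= c <= b) by (unfold c; lra).
  assert (Hf3: Rabs (f3 c - f3 p) <= K4 * Rabs (c - p)).
  { apply (taylor3_mvi a b f3 f4 K4 Hab K4_pos C3 D3 B4); auto. }
  assert (P2: Rabs ((f3 c - f3 p) / 6 * T p g e h al) <= 3 / 4 * K4 * h ^ 4 * RInt (wte p g e) al (al + h)).
  { unfold Rdiv. rewrite !Rabs_mult. rewrite (Rabs_right (/ 6)) by lra.
    destruct (Rlt_dec (Rabs (c - p)) h) as [Hn|Hn].
    - pose proof (T_bound1 p g e h ltac:(lra) Hh al).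
      assert (Rabs (f3 c - f3 p) <= K4 * h) by (eapply Rle_trans; [apply Hf3| apply Rmult_le_compat_l; [apply K4_pos|lra]]).
      apply Rle_trans with ((K4 * h) * / 6 * (h ^ 3 / 8 * RInt (wte p g e) al (al + h))).
      apply Rmult_le_compat. apply Rmult_le_pos; [apply Rabs_pos|lra]. apply Rabs_pos.
      apply Rmult_le_compat_r; lra. auto.
      pose proof K4_pos. assert (0 <= K4 * h ^ 4 * RInt (wte p g e) al (al + h)).
      { apply Rmult_le_pos; auto. apply Rmult_le_pos; auto. apply pow_le; lra. }
      replace (K4 * h * / 6 * (h ^ 3 / 8 * RInt (wte p g e) al (al + h))) with
        (/ 48 * (K4 * h ^ 4 * RInt (wte p g e) al (al + h))) by field.
      replace (3 / 4 * K4 * h ^ 4 * RInt (wte p g e) al (al + h)) with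
        (3 / 4 * (K4 * h ^ 4 * RInt (wte p g e) al (al + h))) by ring. lra.
    - set (d := Rabs (c - p) - h / 2).
      assert (Hd: h / 2 <= d) by (unfold d; lra).
      assert (Dist: forall x, al <= x <= al + h -> d <= Rabs (p - x)).
      { intros x Hx. unfold d. rewrite (Rabs_minus_sym c p).
        replace (p - x) with ((p - c) + (c - x)) by ring.
        assert (Rabs (c - x) <= h / 2) by (apply Rabs_le; unfold c; lra).
        pose proof (Rabs_triang_inv (p - c) (-(c - x))). rewrite Rabs_Ropp in H0.
        replace (p - c - - (c - x)) with (p - c + (c - x)) in H0 by ring. lra. }
      pose proof (T_bound2 p g e h Hg ltac:(lra) Hh al d ltac:(lra) ltac:(lra) Dist) as TB.
      assert (Low: h * Rpower (3 * d) (-g) <= RInt (wte p g e) al (al + h)).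
      { apply wte_int_lower; try lra. intros x Hx. unfold d.
        replace (p - x) with ((p - c) + (c - x)) by ring.
        eapply Rle_trans. apply Rabs_triang. rewrite Rabs_minus_sym.
        assert (Rabs (c - x) <= h / 2) by (apply Rabs_le; unfold c; lra). lra. }
      rewrite <- Rpower_mult_distr in Low by lra.
      assert (Dg: d * Rpower d (-(g+1)) = Rpower d (-g)).
      { rewrite <- (Rpower_1 d) at 1 by lra. rewrite <- Rpower_plus. f_equal; ring. }
      assert (R3: Rpower 3 (-g) * Rpower 3 g = 1).
      { rewrite <- Rpower_plus. replace (-g + g) with 0 by ring. apply Rpower_O; lra. }
      assert (R3b: Rpower 3 g <= 3).
      { rewrite <- (Rpower_1 3) at 2 by lra. apply Rle_Rpower; lra. }
      pose proof (Rpower_pos 3 g). pose proof (Rpower_pos 3 (-g)). pose proof (Rpower_pos d (-g)).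
      pose proof (Rpower_pos d (-(g+1))). pose proof K4_pos.
      assert (Hcd: Rabs (c - p) <= 2 * d) by (unfold d; lra).
      (* |f3c - f3p| * /6 * |T| <= K4*2d/6 * h^5/16 g d^{-(g+1)} = K4 g h^5 d^{-g}/48 *)
      apply Rle_trans with (K4 * (2 * d) * / 6 * (h ^ 5 / 16 * g * Rpower d (-(g+1)))).
      { apply Rmult_le_compat. apply Rmult_le_pos; [apply Rabs_pos|lra]. apply Rabs_pos.
        apply Rmult_le_compat_r. lra. eapply Rle_trans. apply Hf3. apply Rmult_le_compat_l; auto. auto. }
      replace (K4 * (2 * d) * / 6 * (h ^ 5 / 16 * g * Rpower d (-(g+1)))) with
        (K4 * g * h ^ 4 / 48 * (h * (d * Rpower d (-(g+1))))) by field.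
      rewrite Dg.
      assert (h * Rpower d (-g) <= Rpower 3 g * RInt (wte p g e) al (al + h)).
      { assert (Eh: h * Rpower d (-g) = Rpower 3 g * (h * (Rpower 3 (-g) * Rpower d (-g)))).
        { transitivity (h * Rpower d (-g) * (Rpower 3 (-g) * Rpower 3 g)). rewrite R3; ring. ring. }
        rewrite Eh. apply Rmult_le_compat_l; lra. }
      assert (0 <= K4 * g * h ^ 4 / 48).
      { apply Rmult_le_pos. apply Rmult_le_pos. apply Rmult_le_pos; lra. apply pow_le; lra. lra. }
      apply Rle_trans with (K4 * g * h ^ 4 / 48 * (Rpower 3 g * RInt (wte p g e) al (al + h))).
      apply Rmult_le_compat_l; auto.
      assert (0 <= K4 * h ^ 4 * RInt (wte p g e) al (al + h)).
      { apply Rmult_le_pos; auto. apply Rmult_le_pos; auto. apply pow_le; lra. }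
      replace (K4 * g * h ^ 4 / 48 * (Rpower 3 g * RInt (wte p g e) al (al + h))) with
        ((g * Rpower 3 g / 48) * (K4 * h ^ 4 * RInt (wte p g e) al (al + h))) by field.
      replace (3 / 4 * K4 * h ^ 4 * RInt (wte p g e) al (al + h)) with
        (3 / 4 * (K4 * h ^ 4 * RInt (wte p g e) al (al + h))) by ring.
      assert (g * Rpower 3 g / 48 <= 3 / 4) by nra. nra. }
  eapply Rle_trans. apply Rabs_triang.
  assert (0 <= K4 * h ^ 4 * RInt (wte p g e) al (al + h)).
  { apply Rmult_le_pos; auto. apply Rmult_le_pos; [apply K4_pos| apply pow_le; lra]. }
  replace (K4 * h ^ 4 / 4 * RInt (wte p g e) al (al + h)) with (/4 * (K4 * h ^ 4 * RInt (wte p g e) al (al + h))) in P1 by field.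
  replace (3 / 4 * K4 * h ^ 4 * RInt (wte p g e) al (al + h)) with (3/4 * (K4 * h ^ 4 * RInt (wte p g e) al (al + h))) in P2 by ring.
  lra.
Qed.


Lemma far_sum n (al : nat -> R) eta : h / 2 <= eta ->
  (forall j, (j < n)%nat -> forall x, al j <= x <= al j + h -> eta + INR j * h <= Rabs (p - x)) ->
  Rabs (sumk (fun j => T p g e h (al j)) n) <= h ^ 4 / 16 * (Rpower 3 (g + 1) * Rpower eta (-g)).
Proof.
  intros Heta Hd. eapply Rle_trans. apply sumk_abs.
  apply Rle_trans with (sumk (fun j => h ^ 4 / 16 * (h * g * Rpower (eta + INR j * h) (-(g+1)))) n).
  { apply sumk_le. intros j Hj. pose proof (pos_INR j).
    eapply Rle_trans. apply (T_bound2 p g e h Hg ltac:(lra) Hh (al j) (eta + INR j * h)).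
    nra. nra. apply Hd; auto. right; field. }
  rewrite sumk_scal. apply Rmult_le_compat_l. apply Rmult_le_pos. apply pow_le; lra. lra.
  apply far_tele; lra.
Qed.

Lemma T_alpha_mirror i k : p = a + INR i / 2 * h -> (k < i)%nat ->
  T p g e h (a + INR (i - 1 - k) * h) = - T p g e h (a + INR k * h).
Proof.
  intros Hpi Hk. rewrite <- (T_mirror p g e h (proj1 He)). f_equal.
  rewrite !minus_INR by lia. rewrite Hpi. simpl. field.
Qed.

Lemma sumT_bound i : (1 <= i <= 2 * M - 1)%nat -> p = a + INR i / 2 * h ->
  Rabs (sumk (fun k => T p g e h (a + INR k * h)) M) <=
    h ^ 4 / 16 * (Rpower 3 (g + 1) * Rpower (Rmin (p - a) (b - p)) (-g)).
Proof.
  intros Hi Hpi.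
  assert (HiR: 1 <= INR i <= 2 * INR M - 1).
  { split. replace 1 with (INR 1) by reflexivity. apply le_INR; lia.
    replace (2 * INR M - 1) with (INR (2 * M - 1)). apply le_INR; lia.
    rewrite minus_INR, mult_INR by lia. simpl; ring. }
  destruct (Compare_dec.le_dec i M) as [HiM|HiM].
  - assert (Heta: Rmin (p - a) (b - p) = INR i / 2 * h).
    { rewrite Rmin_left. rewrite Hpi; ring. rewrite Hpi, HbM. apply le_INR in HiM. nra. }
    rewrite Heta.
    replace M with (i + (M - i))%nat at 1 by lia. rewrite sumk_split.
    rewrite (sumk_antisym (fun k => T p g e h (a + INR k * h)) i).
    2:{ intros k Hk. apply T_alpha_mirror; auto. }
    rewrite Rplus_0_l.
    apply (far_sum (M - i) (fun j => a + INR (i + j) * h)). nra.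
    intros j Hj x Hx. rewrite plus_INR in Hx. rewrite Rabs_left1. rewrite Hpi. nra.
    rewrite Hpi. pose proof (pos_INR j). nra.
  - assert (Heta: Rmin (p - a) (b - p) = (INR M - INR i / 2) * h).
    { rewrite Rmin_right. rewrite Hpi, HbM; ring. rewrite Hpi, HbM.
      assert (INR M <= INR i) by (apply le_INR; lia). nra. }
    rewrite Heta.
    assert (HMi: INR M + 1 <= INR i) by (rewrite <- S_INR; apply le_INR; lia).
    replace M with ((i - M) + (2 * M - i))%nat at 1 by lia. rewrite sumk_split.
    rewrite (sumk_antisym (fun k => T p g e h (a + INR (i - M + k) * h)) (2 * M - i)).
    2:{ intros k Hk. rewrite <- (T_mirror p g e h (proj1 He)). f_equal.
        repeat first [rewrite plus_INR | rewrite minus_INR by lia | rewrite mult_INR]. rewrite Hpi. simpl. field. }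
    rewrite Rplus_0_r. rewrite sumk_rev.
    apply (far_sum (i - M) (fun j => a + INR (i - M - 1 - j) * h)).
    pose proof (pos_INR M). nra.
    intros j Hj x Hx. rewrite !minus_INR in Hx by lia. rewrite Rabs_right. rewrite Hpi. change (INR 1) with 1 in Hx. lra.
    rewrite Hpi. change (INR 1) with 1 in Hx. pose proof (pos_INR j). assert (0 <= INR j * h) by (apply Rmult_le_pos; lra). assert (0 <= (INR M - INR i / 2) * h) by (apply Rmult_le_pos; lra). lra.
Qed.

Lemma Jw_as_sum : Jw a b p g Eint e = sumk (fun k => RInt Fw (a + INR k * h) (a + INR k * h + h)) M.
Proof.
  unfold Jw. fold Fw. transitivity (RInt Fw a (a + INR M * h)). rewrite <- HbM; reflexivity.
  rewrite RInt_sumk. 2: apply gcont_Fw1.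
  apply sumk_ext. intros k _. rewrite S_INR. f_equal. ring.
Qed.

Lemma wte_as_sum : RInt (wte p g e) a b = sumk (fun k => RInt (wte p g e) (a + INR k * h) (a + INR k * h + h)) M.
Proof.
  transitivity (RInt (wte p g e) a (a + INR M * h)). rewrite <- HbM; reflexivity.
  rewrite RInt_sumk. 2: apply gcont_wte; lra.
  apply sumk_ext. intros k _. rewrite S_INR. f_equal. ring.
Qed.

Lemma Jw_main_bound i : (1 <= i <= 2 * M - 1)%nat -> p = a + INR i / 2 * h ->
  Rabs (Jw a b p g Eint e) <= K3 / 6 * (h ^ 4 / 16 * (Rpower 3 (g + 1) * Rpower (Rmin (p - a) (b - p)) (-g)))
                              + K4 * h ^ 4 * RInt (wte p g e) a b.
Proof.
  intros Hi Hpi. rewrite Jw_as_sum, wte_as_sum.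
  set (A := fun k => RInt Fw (a + INR k * h) (a + INR k * h + h)).
  set (Tk := fun k => T p g e h (a + INR k * h)).
  replace (sumk A M) with (f3 p / 6 * sumk Tk M + sumk (fun k => A k - f3 p / 6 * Tk k) M).
  2:{ rewrite <- sumk_scal, <- sumk_plus. apply sumk_ext. intros; ring. }
  eapply Rle_trans. apply Rabs_triang. apply Rplus_le_compat.
  - rewrite Rabs_mult. unfold Rdiv. rewrite Rabs_mult, (Rabs_right (/6)) by lra.
    apply Rmult_le_compat. apply Rmult_le_pos. apply Rabs_pos. lra. apply Rabs_pos.
    apply Rmult_le_compat_r. lra. apply B3; lra.
    unfold Tk. replace (h ^ 4 * / 16) with (h ^ 4 / 16) by reflexivity. apply (sumT_bound i); auto.
  - eapply Rle_trans. apply sumk_abs. rewrite <- sumk_scal. apply sumk_le. intros k Hk.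
    apply elem_integral; auto.
Qed.

End Main1D.


Definition Cst1 (a b g : R) : R :=
  Rpower 3 (g + 1) / 96 + (Rpower 2 g / (1 - g) * (2 * Rpower (2 * (b - a)) (1 - g))) * Rpower (b - a) g.

Lemma Cst1_pos a b g : 0 < g < 1 -> 0 <= Cst1 a b g.
Proof.
  intros Hg. unfold Cst1. pose proof (Rpower_pos 3 (g+1)). pose proof (Rpower_pos 2 g).
  pose proof (Rpower_pos (2 * (b - a)) (1 - g)). pose proof (Rpower_pos (b - a) g).
  assert (0 < Rpower 2 g / (1 - g)) by (apply Rdiv_lt_0_compat; lra).
  assert (0 <= Rpower 2 g / (1 - g) * (2 * Rpower (2 * (b - a)) (1 - g))) by (apply Rmult_le_pos; lra).
  assert (0 <= Rpower 2 g / (1 - g) * (2 * Rpower (2 * (b - a)) (1 - g)) * Rpower (b - a) g) by (apply Rmult_le_pos; lra).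
  lra.
Qed.

Lemma main1D a b g (f0 f1 f2 f3 f4 : R -> R) K3 K4 (M i : nat) e :
  a < b -> 0 < g < 1 ->
  cont_within a b f0 -> cont_within a b f1 -> cont_within a b f2 -> cont_within a b f3 ->
  (forall t, a < t < b -> is_derive f0 t (f1 t)) ->
  (forall t, a < t < b -> is_derive f1 t (f2 t)) ->
  (forall t, a < t < b -> is_derive f2 t (f3 t)) ->
  (forall t, a < t < b -> is_derive f3 t (f4 t)) ->
  (forall t, a <= t <= b -> Rabs (f3 t) <= K3) ->
  (forall t, a <= t <= b -> Rabs (f4 t) <= K4) ->
  (1 <= M)%nat -> (1 <= i <= 2 * M - 1)%nat ->
  0 < e <= (b - a) / INR M / 2 ->
  Rabs (Jw a b (hnode a ((b - a) / INR M) i) g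
          (fun x => f0 x - Interp a ((b - a) / INR M) M (fun l => f0 (hnode a ((b - a) / INR M) l)) x) e)
  <= (K3 + K4) * Cst1 a b g * (((b - a) / INR M) ^ 4 *
       Rpower (Rmin (hnode a ((b - a) / INR M) i - a) (b - hnode a ((b - a) / INR M) i)) (-g)).
Proof.
  intros Hab Hg C0 C1 C2 C3 D0 D1 D2 D3 B3 B4 HM Hi He.
  set (h := (b - a) / INR M). set (p := hnode a h i).
  assert (HMr: 1 <= INR M) by (replace 1 with (INR 1) by reflexivity; apply le_INR; lia).
  assert (Hh: 0 < h) by (unfold h; apply Rdiv_lt_0_compat; lra).
  assert (He': e <= h / 2) by (unfold h; lra).
  assert (HbM: b = a + INR M * h) by (unfold h; field; lra).
  assert (HiR: 1 <= INR i <= 2 * INR M - 1).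
  { split. replace 1 with (INR 1) by reflexivity. apply le_INR; lia.
    replace (2 * INR M - 1) with (INR (2 * M - 1)). apply le_INR; lia.
    rewrite minus_INR, mult_INR by lia. simpl; ring. }
  assert (Hpi: p = a + INR i / 2 * h) by reflexivity.
  assert (Hp: a < p < b) by (rewrite Hpi, HbM; split; nra).
  assert (K3p: 0 <= K3) by (eapply Rle_trans; [apply Rabs_pos| apply (B3 a); lra]).
  assert (K4p: 0 <= K4) by (eapply Rle_trans; [apply Rabs_pos| apply (B4 a); lra]).
  pose proof (Jw_main_bound a b g Hab Hg f0 f1 f2 f3 f4 K3 K4 C0 C1 C2 C3 D0 D1 D2 D3 B3 B4
     M h p e HM Hh HbM ltac:(lra) He i Hi Hpi) as H.
  unfold Eint in H.
  eapply Rle_trans. apply H.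
  set (eta := Rmin (p - a) (b - p)).
  assert (Heta: 0 < eta <= b - a) by (unfold eta, Rmin; destruct Rle_dec; lra).
  assert (W: RInt (wte p g e) a b <= Rpower 2 g / (1 - g) * (2 * Rpower (2 * (b - a)) (1 - g))).
  { eapply Rle_trans. apply wint_full; try lra.
    assert (h <= b - a) by (rewrite HbM; nra).
    assert (Rpower (p - a + e) (1 - g) <= Rpower (2 * (b - a)) (1 - g)) by (apply rp_incr; lra).
    assert (Rpower (b - p + e) (1 - g) <= Rpower (2 * (b - a)) (1 - g)) by (apply rp_incr; lra).
    apply Rmult_le_compat_l. apply Rlt_le, Rdiv_lt_0_compat. apply Rpower_pos. lra. lra. }
  assert (One: 1 <= Rpower (b - a) g * Rpower eta (-g)).
  { replace 1 with (Rpower (b - a) g * Rpower (b - a) (-g)).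
    apply Rmult_le_compat_l. apply Rlt_le, Rpower_pos. apply rp_decr; lra.
    rewrite <- Rpower_plus. replace (g + - g) with 0 by ring. apply Rpower_O. lra. }
  set (X := h ^ 4 * Rpower eta (-g)).
  assert (HX: 0 <= X) by (unfold X; apply Rmult_le_pos; [apply pow_le; lra| apply Rlt_le, Rpower_pos]).
  set (W0 := Rpower 2 g / (1 - g) * (2 * Rpower (2 * (b - a)) (1 - g))).
  assert (HW0: 0 <= W0).
  { unfold W0. apply Rmult_le_pos. apply Rlt_le, Rdiv_lt_0_compat. apply Rpower_pos. lra.
    pose proof (Rpower_pos (2 * (b - a)) (1 - g)). lra. }
  assert (T1: K3 / 6 * (h ^ 4 / 16 * (Rpower 3 (g + 1) * Rpower eta (-g))) = K3 * (Rpower 3 (g + 1) / 96) * X)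
    by (unfold X; field).
  assert (T2: K4 * h ^ 4 * RInt (wte p g e) a b <= K4 * (W0 * Rpower (b - a) g) * X).
  { apply Rle_trans with (K4 * h ^ 4 * W0). apply Rmult_le_compat_l. apply Rmult_le_pos; auto. apply pow_le; lra. auto.
    unfold X. replace (K4 * (W0 * Rpower (b - a) g) * (h ^ 4 * Rpower eta (-g))) with
      (K4 * h ^ 4 * W0 * (Rpower (b - a) g * Rpower eta (-g))) by ring.
    rewrite <- (Rmult_1_r (K4 * h ^ 4 * W0)) at 1. apply Rmult_le_compat_l; auto.
    apply Rmult_le_pos; auto. apply Rmult_le_pos; auto. apply pow_le; lra. }
  fold eta. rewrite T1. fold X.
  unfold Cst1. fold W0.
  pose proof (Rpower_pos 3 (g+1)). pose proof (Rpower_pos (b - a) g).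
  assert (0 <= W0 * Rpower (b - a) g) by (apply Rmult_le_pos; lra).
  assert (K3 * (Rpower 3 (g + 1) / 96) * X <= K3 * (Rpower 3 (g + 1) / 96 + W0 * Rpower (b - a) g) * X).
  { apply Rmult_le_compat_r; auto. apply Rmult_le_compat_l; auto. lra. }
  assert (K4 * (W0 * Rpower (b - a) g) * X <= K4 * (Rpower 3 (g + 1) / 96 + W0 * Rpower (b - a) g) * X).
  { apply Rmult_le_compat_r; auto. apply Rmult_le_compat_l; auto. assert (0 <= Rpower 3 (g+1)/96) by lra. lra. }
  replace ((K3 + K4) * (Rpower 3 (g + 1) / 96 + W0 * Rpower (b - a) g) * X) with
    (K3 * (Rpower 3 (g + 1) / 96 + W0 * Rpower (b - a) g) * X + K4 * (Rpower 3 (g + 1) / 96 + W0 * Rpower (b - a) g) * X) by ring.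
  lra.
Qed.

Lemma rect_unif F a b c d : cont_on_rect F a b c d ->
  forall eps, 0 < eps -> exists delta, 0 < delta /\
    forall x y x' y', in_rect a b c d x y -> in_rect a b c d x' y' ->
      Rabs (x - x') < delta -> Rabs (y - y') < delta -> Rabs (F x y - F x' y') < eps.
Proof.
  intros HF eps Heps.
  assert (Hc: forall u v, exists dl, 0 < dl /\ (in_rect a b c d u v -> forall x' y', in_rect a b c d x' y' ->
       Rabs (x' - u) < dl -> Rabs (y' - v) < dl -> Rabs (F x' y' - F u v) < eps / 2)).
  { intros u v. destruct (classic (in_rect a b c d u v)) as [Hin|Hout].
    - destruct (HF u v Hin (eps / 2)) as [dl [Hdl H]]. lra. exists dl. split; auto.
    - exists 1. split. lra. intros; contradiction. }
  set (dl := fun u v => proj1_sig (constructive_indefinite_description _ (Hc u v))).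
  assert (Pdl: forall u v, 0 < dl u v /\ (in_rect a b c d u v -> forall x' y', in_rect a b c d x' y' ->
       Rabs (x' - u) < dl u v -> Rabs (y' - v) < dl u v -> Rabs (F x' y' - F u v) < eps / 2)).
  { intros u v. unfold dl. destruct (constructive_indefinite_description _ (Hc u v)) as [z Hz]. simpl. auto. }
  assert (Pos: forall u v, 0 < dl u v / 2) by (intros u v; destruct (Pdl u v); lra).
  destruct (compactness_value_2d a b c d (fun u v => mkposreal _ (Pos u v))) as [d0 Hd0].
  exists d0. split. apply cond_pos.
  intros x y x' y' Hxy Hxy' Hx Hy.
  apply NNPP. intros Hn. apply (Hd0 x y (proj1 Hxy) (proj2 Hxy)).
  intros [u [v [Hu [Hv [Hxu [Hyv Hdd]]]]]]. simpl in *. apply Hn.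
  destruct (Pdl u v) as [Hp H]. assert (Hin: in_rect a b c d u v) by (split; auto).
  assert (A1: Rabs (F x y - F u v) < eps / 2) by (apply H; auto; lra).
  assert (A2: Rabs (F x' y' - F u v) < eps / 2).
  { apply H; auto.
    replace (x' - u) with ((x' - x) + (x - u)) by ring. eapply Rle_lt_trans. apply Rabs_triang.
    rewrite Rabs_minus_sym in Hx. lra.
    replace (y' - v) with ((y' - y) + (y - v)) by ring. eapply Rle_lt_trans. apply Rabs_triang.
    rewrite Rabs_minus_sym in Hy. lra. }
  replace (F x y - F x' y') with ((F x y - F u v) - (F x' y' - F u v)) by ring.
  eapply Rle_lt_trans. apply Rabs_triang. rewrite Rabs_Ropp. lra.
Qed.

Lemma chain1d lo hi delta : lo <= hi -> 0 < delta -> exists N, 0 <= N /\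
  forall f : R -> R, (forall s t, lo <= s <= hi -> lo <= t <= hi -> Rabs (s - t) < delta -> Rabs (f s - f t) <= 1) ->
  forall x, lo <= x <= hi -> Rabs (f x) <= Rabs (f lo) + N.
Proof.
  intros Hlh Hd. destruct (INR_archimed (delta / 2) (hi - lo)) as [n Hn]. lra.
  exists (INR n). split. apply pos_INR.
  intros f Hf.
  assert (Ind: forall m, forall x, lo <= x <= hi -> x <= lo + INR m * (delta / 2) -> Rabs (f x) <= Rabs (f lo) + INR m).
  { induction m; intros x Hx Hxm.
    - simpl in *. assert (x = lo) by lra. subst. lra.
    - rewrite S_INR in *. destruct (Rle_dec x (lo + INR m * (delta / 2))) as [Hl|Hl].
      + specialize (IHm x Hx Hl). lra.
      + set (x' := lo + INR m * (delta / 2)).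
        assert (Hx': lo <= x' <= hi) by (unfold x'; pose proof (pos_INR m); nra).
        specialize (IHm x' Hx' ltac:(unfold x'; lra)).
        assert (Rabs (f x - f x') <= 1) by (apply Hf; auto; apply Rabs_def1; unfold x' in *; lra).
        pose proof (Rabs_triang_inv (f x) (f x')). lra. }
  intros x Hx. apply Ind; auto. nra.
Qed.

Lemma rect_bound F a b c d : a <= b -> c <= d -> cont_on_rect F a b c d ->
  exists K, 0 <= K /\ forall x y, in_rect a b c d x y -> Rabs (F x y) <= K.
Proof.
  intros Hab Hcd HF. destruct (rect_unif F a b c d HF 1) as [dl [Hdl H]]. lra.
  destruct (chain1d a b dl Hab Hdl) as [N1 [HN1 C1]].
  destruct (chain1d c d dl Hcd Hdl) as [N2 [HN2 C2]].
  exists (Rabs (F a c) + N1 + N2). split. pose proof (Rabs_pos (F a c)). lra.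
  intros x y [Hx Hy].
  assert (X1: Rabs (F x c) <= Rabs (F a c) + N1).
  { apply (C1 (fun x => F x c)); auto. intros s t Hs Ht Hst. apply Rlt_le, H; try (split; lra); auto.
    rewrite Rminus_eq_0, Rabs_R0; auto. }
  assert (X2: Rabs (F x y) <= Rabs (F x c) + N2).
  { apply (C2 (fun y => F x y)); auto. intros s t Hs Ht Hst. apply Rlt_le, H; try (split; lra); auto.
    rewrite Rminus_eq_0, Rabs_R0; auto. }
  lra.
Qed.

Lemma rect_cont_x F a b c d y : cont_on_rect F a b c d -> c <= y <= d -> cont_within a b (fun x => F x y).
Proof.
  intros HF Hy x Hx eps He. destruct (HF x y (conj Hx Hy) eps He) as [dl [Hdl H]].
  exists dl; split; auto. intros x' Hx' Hxx. apply H; auto. split; auto.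
  rewrite Rminus_eq_0, Rabs_R0; auto.
Qed.

Lemma rect_cont_y F a b c d x : cont_on_rect F a b c d -> a <= x <= b -> cont_within c d (fun y => F x y).
Proof.
  intros HF Hx y Hy eps He. destruct (HF x y (conj Hx Hy) eps He) as [dl [Hdl H]].
  exists dl; split; auto. intros y' Hy' Hyy. apply H; auto. split; auto.
  rewrite Rminus_eq_0, Rabs_R0; auto.
Qed.

Lemma hasd_derive f lo hi x l : lo < x < hi -> has_deriv_in f lo hi x l -> is_derive f x l.
Proof.
  intros Hx H. apply is_derive_Reals. intros eps He.
  destruct (H eps He) as [dl [Hdl K]].
  assert (Hpos: 0 < Rmin dl (Rmin (x - lo) (hi - x))) by (apply Rmin_pos; auto; apply Rmin_pos; lra).
  exists (mkposreal _ Hpos). intros h Hh Hh'. simpl in Hh'.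
  assert (Rabs h < dl) by (eapply Rlt_le_trans; [apply Hh'| apply Rmin_l]).
  assert (Rabs h < Rmin (x - lo) (hi - x)) by (eapply Rlt_le_trans; [apply Hh'| apply Rmin_r]).
  assert (Rabs h < x - lo) by (eapply Rlt_le_trans; [apply H1| apply Rmin_l]).
  assert (Rabs h < hi - x) by (eapply Rlt_le_trans; [apply H1| apply Rmin_r]).
  apply K; auto. apply Rabs_def2 in H2. apply Rabs_def2 in H3. lra.
Qed.

Lemma uQ_Interp u a b c d Mx My x y :
  uQ u a b c d Mx My x y =
  Interp a ((b - a) / INR Mx) Mx (fun l => Interp c ((d - c) / INR My) My
     (fun r => u (hnode a ((b - a) / INR Mx) l) (hnode c ((d - c) / INR My) r)) y) x.
Proof.
  unfold uQ, Interp. apply sum_eq. intros l _. rewrite scal_sum. apply sum_eq. intros r _. ring.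
Qed.

Lemma hnode_in a h M l : 0 < h -> (l <= 2 * M)%nat -> a <= hnode a h l <= a + INR M * h.
Proof.
  intros Hh Hl. unfold hnode, node. apply le_INR in Hl. rewrite mult_INR in Hl. simpl in Hl.
  pose proof (pos_INR l). split; nra.
Qed.

Lemma Jw_sum' lo hi p g (F : nat -> R -> R) (cf : nat -> R) n e : lo < p -> p < hi -> 0 < e ->
  (forall l, (l <= n)%nat -> cont_within lo hi (F l)) ->
  Jw lo hi p g (fun x => sum_f_R0 (fun l => cf l * F l x) n) e = sum_f_R0 (fun l => cf l * Jw lo hi p g (F l) e) n.
Proof.
  intros H1 H2 He HF. induction n; simpl.
  { apply Jw_scal; auto. }
  assert (Cs: cont_within lo hi (fun x => sum_f_R0 (fun l => cf l * F l x) n)).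
  { apply cont_within_sum. intros; apply cont_within_scal; auto. }
  assert (Cl: cont_within lo hi (fun x => cf (S n) * F (S n) x)).
  { apply cont_within_scal; auto. }
  rewrite (Jw_plus lo hi p g H1 H2 _ _ e He Cs Cl).
  rewrite IHn by (intros; apply HF; lia). rewrite Jw_scal; auto.
Qed.

Lemma Jw_minus lo hi p g F G e : lo < p -> p < hi -> 0 < e -> cont_within lo hi F -> cont_within lo hi G ->
  Jw lo hi p g (fun x => F x - G x) e = Jw lo hi p g F e - Jw lo hi p g G e.
Proof.
  intros H1 H2 He HF HG. rewrite (Jw_ext lo hi p g H1 H2 _ (fun x => F x + (-1) * G x)) by (intros; ring).
  rewrite Jw_plus, Jw_scal; auto. ring. apply cont_within_scal; auto.
Qed.

Lemma islim_minus J1 J2 v1 v2 : islim J1 v1 -> islim J2 v2 -> islim (fun e => J1 e - J2 e) (v1 - v2).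
Proof.
  intros H1 H2. apply (islim_ext (fun e => J1 e + (-1) * J2 e) _ _ 1). lra. intros; ring.
  replace (v1 - v2) with (v1 + (-1) * v2) by ring. apply islim_plus; auto. apply islim_scal; auto.
Qed.

Definition W0 (lo hi g : R) := Rpower 2 g / (1 - g) * (2 * Rpower (2 * (hi - lo)) (1 - g)).

Lemma W0_pos lo hi g : 0 < g < 1 -> 0 <= W0 lo hi g.
Proof.
  intros Hg. unfold W0. apply Rmult_le_pos. apply Rlt_le, Rdiv_lt_0_compat. apply Rpower_pos. lra.
  pose proof (Rpower_pos (2 * (hi - lo)) (1 - g)). lra.
Qed.

Lemma Wb_le lo hi p g e : lo < p < hi -> 0 < g < 1 -> 0 < e <= hi - lo -> Wb lo hi p g e <= W0 lo hi g.
Proof.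
  intros Hp Hg He. unfold Wb, W0, C2. apply Rmult_le_compat_l.
  apply Rlt_le, Rdiv_lt_0_compat. apply Rpower_pos. lra.
  assert (Rpower (p - lo + e) (1 - g) <= Rpower (2 * (hi - lo)) (1 - g)) by (apply rp_incr; lra).
  assert (Rpower (hi - p + e) (1 - g) <= Rpower (2 * (hi - lo)) (1 - g)) by (apply rp_incr; lra).
  lra.
Qed.

Lemma Jw_bound_W0 lo hi p g F B e : lo < p < hi -> 0 < g < 1 -> 0 < e <= hi - lo -> cont_within lo hi F ->
  (forall x, lo <= x <= hi -> Rabs (F x) <= B) -> Rabs (Jw lo hi p g F e) <= B * W0 lo hi g.
Proof.
  intros Hp Hg He HF HB. eapply Rle_trans. apply Jw_bound; auto; lra.
  assert (0 <= B) by (eapply Rle_trans; [apply Rabs_pos| apply (HB lo); lra]).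
  apply Rmult_le_compat_l; auto. apply Wb_le; auto.
Qed.

Lemma Interp_ext a h M v w x : (forall l, (l <= 2 * M)%nat -> v l = w l) -> Interp a h M v x = Interp a h M w x.
Proof. intros H. unfold Interp. apply sum_eq. intros l Hl. rewrite H; auto. Qed.

Lemma Interp_sum_form a h M v x : Interp a h M v x = sum_f_R0 (fun l => v l * phi_half a h M l x) (2 * M).
Proof. unfold Interp. apply sum_eq. intros; ring. Qed.

Theorem lemma3p9 :
  forall (a b c d g : R) (u : R -> R -> R),
    a < b -> c < d -> 0 < g < 1 ->
    Ck_rect 6 u a b c d ->
    exists C : R,
      forall (Mx My i j : nat),
        (2 <= Mx)%nat -> (2 <= My)%nat ->
        (1 <= i <= 2 * Mx - 1)%nat -> (1 <= j <= 2 * My - 1)%nat ->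
        let hx := (b - a) / INR Mx in
        let hy := (d - c) / INR My in
        let xi := hnode a hx i in
        let yj := hnode c hy j in
        let eta := Rmin (xi - a) (b - xi) in
        let teta := Rmin (yj - c) (d - yj) in
        exists I : R,
          weak_sing_double_int (fun x y => u x y - uQ u a b c d Mx My x y)
            a b c d xi yj g I /\
          Rabs I <= C * (hx ^ 4 * Rpower eta (- g) + hy ^ 4 * Rpower teta (- g)
                         + Rpower hx (5 - g) + Rpower hy (5 - g)).
Proof.
  intros a b c d g u Hab Hcd Hg Hck.
  destruct Hck as [D [HD0 [HDc HDd]]].
  destruct (rect_bound (D 3%nat 0%nat) a b c d) as [K3x [K3x0 HK3x]]; try lra. apply HDc; lia.
  destruct (rect_bound (D 4%nat 0%nat) a b c d) as [K4x [K4x0 HK4x]]; try lra. apply HDc; lia.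
  destruct (rect_bound (D 0%nat 3%nat) a b c d) as [K3y [K3y0 HK3y]]; try lra. apply HDc; lia.
  destruct (rect_bound (D 0%nat 4%nat) a b c d) as [K4y [K4y0 HK4y]]; try lra. apply HDc; lia.
  assert (Hu: cont_on_rect u a b c d).
  { intros x y Hxy eps He. destruct (HDc 0%nat 0%nat ltac:(lia) x y Hxy eps He) as [dl [Hdl H]].
    exists dl; split; auto. intros x' y' Hxy' H1 H2. rewrite <- !HD0; auto. }
  set (W0x := W0 a b g). set (W0y := W0 c d g).
  assert (W0x0: 0 <= W0x) by (apply W0_pos; auto).
  assert (W0y0: 0 <= W0y) by (apply W0_pos; auto).
  set (Cx := (K3x + K4x) * Cst1 a b g). set (Cy := (K3y + K4y) * Cst1 c d g).
  assert (Cx0: 0 <= Cx) by (unfold Cx; apply Rmult_le_pos; [lra| apply Cst1_pos; auto]).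
  assert (Cy0: 0 <= Cy) by (unfold Cy; apply Rmult_le_pos; [lra| apply Cst1_pos; auto]).
  exists (Cx * W0y + 3 * W0x * Cy).
  intros Mx My i j HMx HMy Hi Hj hx hy xi yj eta teta.

  assert (HMxr: 1 <= INR Mx) by (replace 1 with (INR 1) by reflexivity; apply le_INR; lia).
  assert (HMyr: 1 <= INR My) by (replace 1 with (INR 1) by reflexivity; apply le_INR; lia).
  assert (Hhx: 0 < hx) by (unfold hx; apply Rdiv_lt_0_compat; lra).
  assert (Hhy: 0 < hy) by (unfold hy; apply Rdiv_lt_0_compat; lra).
  assert (HbM: b = a + INR Mx * hx) by (unfold hx; field; lra).
  assert (HdM: d = c + INR My * hy) by (unfold hy; field; lra).
  assert (HiR: 1 <= INR i <= 2 * INR Mx - 1).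
  { split. replace 1 with (INR 1) by reflexivity. apply le_INR; lia.
    replace (2 * INR Mx - 1) with (INR (2 * Mx - 1)). apply le_INR; lia.
    rewrite minus_INR, mult_INR by lia. simpl; ring. }
  assert (HjR: 1 <= INR j <= 2 * INR My - 1).
  { split. replace 1 with (INR 1) by reflexivity. apply le_INR; lia.
    replace (2 * INR My - 1) with (INR (2 * My - 1)). apply le_INR; lia.
    rewrite minus_INR, mult_INR by lia. simpl; ring. }
  assert (Hxi: a < xi < b) by (unfold xi, hnode, node; rewrite HbM; split; nra).
  assert (Hyj: c < yj < d) by (unfold yj, hnode, node; rewrite HdM; split; nra).
  assert (Hnx: forall l, (l <= 2 * Mx)%nat -> a <= hnode a hx l <= b) by (intros; rewrite HbM; apply hnode_in; auto).
  assert (Hny: forall r, (r <= 2 * My)%nat -> c <= hnode c hy r <= d) by (intros; rewrite HdM; apply hnode_in; auto).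
  assert (HMx1: (1 <= Mx)%nat) by lia. assert (HMy1: (1 <= My)%nat) by lia.
  set (E1 := fun y x => u x y - Interp a hx Mx (fun l => u (hnode a hx l) y) x).
  set (V := fun l y => Interp c hy My (fun r => u (hnode a hx l) (hnode c hy r)) y).
  set (E2 := fun l y => u (hnode a hx l) y - V l y).
  assert (Cphi: forall l, cont_within a b (phi_half a hx Mx l)).
  { intros l. rewrite HbM. apply phi_half_cont; auto. }
  assert (CIx: forall v, cont_within a b (Interp a hx Mx v)).
  { intros v. rewrite HbM. apply Interp_cont; auto. }
  assert (CIy: forall v, cont_within c d (Interp c hy My v)).
  { intros v. rewrite HdM. apply Interp_cont; auto. }
  assert (CE1: forall y, c <= y <= d -> cont_within a b (E1 y)).
  { intros y Hy. unfold E1. apply cont_within_minus. apply (rect_cont_x u a b c d y Hu Hy). apply CIx. }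
  assert (CE2: forall l, (l <= 2 * Mx)%nat -> cont_within c d (E2 l)).
  { intros l Hl. unfold E2. apply cont_within_minus. apply (rect_cont_y u a b c d _ Hu (Hnx l Hl)). apply CIy. }
  assert (CuQ: forall y, c <= y <= d -> cont_within a b (fun x => u x y - uQ u a b c d Mx My x y)).
  { intros y Hy. apply cont_within_minus. apply (rect_cont_x u a b c d y Hu Hy).
    apply (cont_within_ext _ _ (Interp a hx Mx (fun l => V l y))). intros x _. rewrite uQ_Interp. reflexivity.
    apply CIx. }
  assert (HG1e: forall y, exists v, c <= y <= d -> islim (Jw a b xi g (E1 y)) v).
  { intros y. destruct (classic (c <= y <= d)) as [Hy|Hy].
    - destruct (Jw_exists a b xi g (proj1 Hxi) (proj2 Hxi) Hg (E1 y) (CE1 y Hy)) as [v Hv]. exists v; auto.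
    - exists 0. intros; contradiction. }
  set (G1 := fun y => proj1_sig (constructive_indefinite_description _ (HG1e y))).
  assert (HG1: forall y, c <= y <= d -> islim (Jw a b xi g (E1 y)) (G1 y)).
  { intros y Hy. unfold G1. destruct (constructive_indefinite_description _ (HG1e y)) as [v Hv]. simpl. auto. }
  assert (HAe: forall l, exists v, islim (Jw a b xi g (phi_half a hx Mx l)) v).
  { intros l. apply (Jw_exists a b xi g (proj1 Hxi) (proj2 Hxi) Hg). apply Cphi. }
  set (A := fun l => proj1_sig (constructive_indefinite_description _ (HAe l))).
  assert (HA: forall l, islim (Jw a b xi g (phi_half a hx Mx l)) (A l)).
  { intros l. unfold A. destruct (constructive_indefinite_description _ (HAe l)) as [v Hv]. simpl. auto. }
  assert (HZe: forall l, exists v, (l <= 2 * Mx)%nat -> islim (Jw c d yj g (E2 l)) v).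
  { intros l. destruct (Compare_dec.le_dec l (2 * Mx)) as [Hl|Hl].
    - destruct (Jw_exists c d yj g (proj1 Hyj) (proj2 Hyj) Hg (E2 l) (CE2 l Hl)) as [v Hv]. exists v; auto.
    - exists 0. intros; contradiction. }
  set (Z := fun l => proj1_sig (constructive_indefinite_description _ (HZe l))).
  assert (HZ: forall l, (l <= 2 * Mx)%nat -> islim (Jw c d yj g (E2 l)) (Z l)).
  { intros l Hl. unfold Z. destruct (constructive_indefinite_description _ (HZe l)) as [v Hv]. simpl. auto. }

  assert (HG1b: forall y, c <= y <= d -> Rabs (G1 y) <= Cx * (hx ^ 4 * Rpower eta (-g))).
  { intros y Hy. apply (islim_bound (Jw a b xi g (E1 y)) (G1 y) _ (hx / 2)). lra. 2: apply HG1; auto.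
    intros e He.
    rewrite (Jw_ext a b xi g (proj1 Hxi) (proj2 Hxi) (E1 y)
      (fun x => D 0%nat 0%nat x y - Interp a ((b - a) / INR Mx) Mx (fun l => D 0%nat 0%nat (hnode a ((b - a) / INR Mx) l) y) x)).
    2:{ intros x Hx. unfold E1. rewrite HD0 by (split; auto). f_equal. apply Interp_ext. intros l Hl.
        rewrite HD0; auto. split; auto. }
    unfold Cx, xi, eta, hx.
    apply (main1D a b g (fun x => D 0%nat 0%nat x y) (fun x => D 1%nat 0%nat x y) (fun x => D 2%nat 0%nat x y)
             (fun x => D 3%nat 0%nat x y) (fun x => D 4%nat 0%nat x y) K3x K4x Mx i e); auto.
    - apply (rect_cont_x (D 0%nat 0%nat) a b c d y); auto; apply HDc; lia.
    - apply (rect_cont_x (D 1%nat 0%nat) a b c d y); auto; apply HDc; lia.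
    - apply (rect_cont_x (D 2%nat 0%nat) a b c d y); auto; apply HDc; lia.
    - apply (rect_cont_x (D 3%nat 0%nat) a b c d y); auto; apply HDc; lia.
    - intros t Ht. apply (hasd_derive _ a b); auto. apply (proj1 (HDd 0%nat 0%nat ltac:(lia) t y (conj (conj (Rlt_le _ _ (proj1 Ht)) (Rlt_le _ _ (proj2 Ht))) Hy))).
    - intros t Ht. apply (hasd_derive _ a b); auto. apply (proj1 (HDd 1%nat 0%nat ltac:(lia) t y (conj (conj (Rlt_le _ _ (proj1 Ht)) (Rlt_le _ _ (proj2 Ht))) Hy))).
    - intros t Ht. apply (hasd_derive _ a b); auto. apply (proj1 (HDd 2%nat 0%nat ltac:(lia) t y (conj (conj (Rlt_le _ _ (proj1 Ht)) (Rlt_le _ _ (proj2 Ht))) Hy))).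
    - intros t Ht. apply (hasd_derive _ a b); auto. apply (proj1 (HDd 3%nat 0%nat ltac:(lia) t y (conj (conj (Rlt_le _ _ (proj1 Ht)) (Rlt_le _ _ (proj2 Ht))) Hy))).
    - intros t Ht. apply HK3x. split; auto.
    - intros t Ht. apply HK4x. split; auto.
    - unfold hx in He. lra. }
  assert (HZb: forall l, (l <= 2 * Mx)%nat -> Rabs (Z l) <= Cy * (hy ^ 4 * Rpower teta (-g))).
  { intros l Hl. set (xl := hnode a hx l). assert (Hxl: a <= xl <= b) by (apply Hnx; auto).
    apply (islim_bound (Jw c d yj g (E2 l)) (Z l) _ (hy / 2)). lra. 2: apply HZ; auto.
    intros e He.
    rewrite (Jw_ext c d yj g (proj1 Hyj) (proj2 Hyj) (E2 l)
      (fun y => D 0%nat 0%nat xl y - Interp c ((d - c) / INR My) My (fun r => D 0%nat 0%nat xl (hnode c ((d - c) / INR My) r)) y)).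
    2:{ intros y Hy. unfold E2, V. fold xl. rewrite HD0 by (split; auto). f_equal. apply Interp_ext. intros r Hr.
        rewrite HD0; auto. split; auto. }
    unfold Cy, yj, teta, hy.
    apply (main1D c d g (fun y => D 0%nat 0%nat xl y) (fun y => D 0%nat 1%nat xl y) (fun y => D 0%nat 2%nat xl y)
             (fun y => D 0%nat 3%nat xl y) (fun y => D 0%nat 4%nat xl y) K3y K4y My j e); auto.
    - apply (rect_cont_y (D 0%nat 0%nat) a b c d xl); auto; apply HDc; lia.
    - apply (rect_cont_y (D 0%nat 1%nat) a b c d xl); auto; apply HDc; lia.
    - apply (rect_cont_y (D 0%nat 2%nat) a b c d xl); auto; apply HDc; lia.
    - apply (rect_cont_y (D 0%nat 3%nat) a b c d xl); auto; apply HDc; lia.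
    - intros t Ht. apply (hasd_derive _ c d); auto. apply (proj2 (HDd 0%nat 0%nat ltac:(lia) xl t (conj Hxl (conj (Rlt_le _ _ (proj1 Ht)) (Rlt_le _ _ (proj2 Ht)))))).
    - intros t Ht. apply (hasd_derive _ c d); auto. apply (proj2 (HDd 0%nat 1%nat ltac:(lia) xl t (conj Hxl (conj (Rlt_le _ _ (proj1 Ht)) (Rlt_le _ _ (proj2 Ht)))))).
    - intros t Ht. apply (hasd_derive _ c d); auto. apply (proj2 (HDd 0%nat 2%nat ltac:(lia) xl t (conj Hxl (conj (Rlt_le _ _ (proj1 Ht)) (Rlt_le _ _ (proj2 Ht)))))).
    - intros t Ht. apply (hasd_derive _ c d); auto. apply (proj2 (HDd 0%nat 3%nat ltac:(lia) xl t (conj Hxl (conj (Rlt_le _ _ (proj1 Ht)) (Rlt_le _ _ (proj2 Ht)))))).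
    - intros t Ht. apply HK3y. split; auto.
    - intros t Ht. apply HK4y. split; auto.
    - unfold hy in He. lra. }

  assert (CG1: cont_within c d G1).
  { intros y0 Hy0 eps Heps.
    set (ep := eps / (4 * W0x + 1)).
    assert (Hep: 0 < ep) by (unfold ep; apply Rdiv_lt_0_compat; lra).
    destruct (rect_unif u a b c d Hu ep Hep) as [dl [Hdl Hunif]].
    exists dl. split; auto. intros y' Hy' Hyy.
    assert (Hlim := islim_minus _ _ _ _ (HG1 y' Hy') (HG1 y0 Hy0)).
    apply (islim_ext _ (Jw a b xi g (fun x => E1 y' x - E1 y0 x)) _ 1) in Hlim.
    2: lra. 2:{ intros e He. rewrite Jw_minus; auto; try lra; apply CE1; auto. }
    assert (Bd: Rabs (G1 y' - G1 y0) <= (4 * ep) * W0x).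
    { apply (islim_bound (Jw a b xi g (fun x : R => E1 y' x - E1 y0 x)) (G1 y' - G1 y0) _ (b - a)). lra. 2: exact Hlim.
      intros e He. apply Jw_bound_W0; auto. lra.
      apply cont_within_minus; apply CE1; auto.
      intros x Hx. unfold E1.
      replace (u x y' - Interp a hx Mx (fun l => u (hnode a hx l) y') x - (u x y0 - Interp a hx Mx (fun l => u (hnode a hx l) y0) x))
        with ((u x y' - u x y0) - Interp a hx Mx (fun l => u (hnode a hx l) y' - u (hnode a hx l) y0) x)
        by (rewrite Interp_linear; ring).
      eapply Rle_trans. apply Rabs_triang. rewrite Rabs_Ropp.
      assert (Rabs (u x y' - u x y0) < ep).
      { apply Hunif; try (split; auto); auto. rewrite Rminus_eq_0, Rabs_R0; auto. }
      assert (Rabs (Interp a hx Mx (fun l => u (hnode a hx l) y' - u (hnode a hx l) y0) x) <= 3 * ep).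
      { apply Interp_bound; auto. rewrite <- HbM; auto. intros l Hl. apply Rlt_le, Hunif; try (split; auto; apply Hnx; auto); auto.
        rewrite Rminus_eq_0, Rabs_R0; auto. }
      lra. }
    eapply Rle_lt_trans. apply Bd.
    unfold ep. apply (Rmult_lt_reg_r (4 * W0x + 1)). lra. unfold Rdiv.
    replace (4 * (eps * / (4 * W0x + 1)) * W0x * (4 * W0x + 1)) with (4 * W0x * eps * ((4 * W0x + 1) * / (4 * W0x + 1))) by ring.
    rewrite Rinv_r by lra. nra. }

  set (G := fun y => G1 y + sum_f_R0 (fun l => E2 l y * A l) (2 * Mx)).
  assert (CG: cont_within c d G).
  { unfold G. apply cont_within_plus; auto. apply cont_within_sum. intros l Hl.
    apply (cont_within_ext _ _ (fun y => A l * E2 l y)). intros; ring. apply cont_within_scal; auto. }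
  assert (Inner: forall y, c <= y <= d ->
     sing_int (fun x => (u x y - uQ u a b c d Mx My x y) / Rpower (Rabs (xi - x)) g) a b xi (G y)).
  { intros y Hy.
    apply (PV_of_lim a b xi g (proj1 Hxi) (proj2 Hxi) Hg (fun x => u x y - uQ u a b c d Mx My x y) (G y) (CuQ y Hy)).
    apply (islim_ext (fun e => Jw a b xi g (E1 y) e + sum_f_R0 (fun l => E2 l y * Jw a b xi g (phi_half a hx Mx l) e) (2 * Mx)) _ _ 1).
    lra.
    { intros e He.
      rewrite (Jw_ext a b xi g (proj1 Hxi) (proj2 Hxi) (fun x => u x y - uQ u a b c d Mx My x y)
          (fun x => E1 y x + sum_f_R0 (fun l => E2 l y * phi_half a hx Mx l x) (2 * Mx))).
      2:{ intros x Hx. rewrite uQ_Interp. fold hx hy. unfold E1, E2. fold (V 0%nat y).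
          change (fun l => Interp c hy My (fun r => u (hnode a hx l) (hnode c hy r)) y) with (fun l => V l y).
          rewrite (Interp_sum_form a hx Mx (fun l => V l y)), (Interp_sum_form a hx Mx (fun l => u (hnode a hx l) y)).
          assert (sum_f_R0 (fun l => (u (hnode a hx l) y - V l y) * phi_half a hx Mx l x) (2 * Mx) =
                  sum_f_R0 (fun l => u (hnode a hx l) y * phi_half a hx Mx l x) (2 * Mx) -
                  sum_f_R0 (fun l => V l y * phi_half a hx Mx l x) (2 * Mx)).
          { rewrite <- minus_sum. apply sum_eq. intros; ring. }
          rewrite H. ring. }
      rewrite (Jw_plus a b xi g (proj1 Hxi) (proj2 Hxi)); try lra. 2: apply CE1; auto.
      2:{ apply cont_within_sum. intros; apply cont_within_scal; auto. }
      f_equal. symmetry. apply (Jw_sum a b xi g (proj1 Hxi) (proj2 Hxi)); try lra. auto. }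
    apply islim_plus. apply HG1; auto. apply islim_sum. intros l Hl. apply islim_scal. apply HA. }

  destruct (Jw_exists c d yj g (proj1 Hyj) (proj2 Hyj) Hg G1 CG1) as [I1 HI1].
  exists (I1 + sum_f_R0 (fun l => A l * Z l) (2 * Mx)).
  split.
  - exists G. split.
    + intros y Hy. apply Inner; auto.
    + apply (PV_of_lim c d yj g (proj1 Hyj) (proj2 Hyj) Hg G _ CG).
      apply (islim_ext (fun e => Jw c d yj g G1 e + sum_f_R0 (fun l => A l * Jw c d yj g (E2 l) e) (2 * Mx)) _ _ 1).
      lra.
      { intros e He.
        rewrite (Jw_ext c d yj g (proj1 Hyj) (proj2 Hyj) G (fun y => G1 y + sum_f_R0 (fun l => A l * E2 l y) (2 * Mx))).
        2:{ intros y _. unfold G. f_equal. apply sum_eq. intros; ring. }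
        rewrite (Jw_plus c d yj g (proj1 Hyj) (proj2 Hyj)); try lra; auto.
        2:{ apply cont_within_sum. intros; apply cont_within_scal; auto. }
        f_equal. symmetry. apply (Jw_sum' c d yj g); try lra. auto. }
      apply islim_plus. auto. apply islim_sum. intros l Hl. apply islim_scal. apply HZ; auto.
  - assert (B1: Rabs I1 <= Cx * (hx ^ 4 * Rpower eta (-g)) * W0y).
    { apply (islim_bound (Jw c d yj g G1) I1 _ (d - c)). lra. 2: auto.
      intros e He. apply Jw_bound_W0; auto. lra. }
    assert (Hs: islim (Jw a b xi g (Interp a hx Mx Z)) (sum_f_R0 (fun l => Z l * A l) (2 * Mx))).
    { apply (islim_ext (fun e => sum_f_R0 (fun l => Z l * Jw a b xi g (phi_half a hx Mx l) e) (2 * Mx)) _ _ 1).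
      lra.
      { intros e He. rewrite (Jw_ext a b xi g (proj1 Hxi) (proj2 Hxi) (Interp a hx Mx Z)
            (fun x => sum_f_R0 (fun l => Z l * phi_half a hx Mx l x) (2 * Mx))).
        2:{ intros x _. apply Interp_sum_form. }
        symmetry. apply (Jw_sum a b xi g (proj1 Hxi) (proj2 Hxi)); try lra. auto. }
      apply islim_sum. intros l Hl. apply islim_scal. apply HA. }
    assert (B2: Rabs (sum_f_R0 (fun l => Z l * A l) (2 * Mx)) <= 3 * (Cy * (hy ^ 4 * Rpower teta (-g))) * W0x).
    { apply (islim_bound (Jw a b xi g (Interp a hx Mx Z)) _ _ (b - a)). lra. 2: auto.
      intros e He. apply Jw_bound_W0; auto. lra.
      intros x Hx. apply Interp_bound; auto. rewrite <- HbM; auto. }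
    replace (sum_f_R0 (fun l => A l * Z l) (2 * Mx)) with (sum_f_R0 (fun l => Z l * A l) (2 * Mx))
      by (apply sum_eq; intros; ring).
    set (X := hx ^ 4 * Rpower eta (-g)). set (Y := hy ^ 4 * Rpower teta (-g)).
    fold X in B1. fold Y in B2.
    assert (HX: 0 <= X) by (unfold X; apply Rmult_le_pos; [apply pow_le; lra| apply Rlt_le, Rpower_pos]).
    assert (HY: 0 <= Y) by (unfold Y; apply Rmult_le_pos; [apply pow_le; lra| apply Rlt_le, Rpower_pos]).
    pose proof (Rpower_pos hx (5 - g)). pose proof (Rpower_pos hy (5 - g)).
    eapply Rle_trans. apply Rabs_triang.
    assert (0 <= Cx * W0y) by (apply Rmult_le_pos; auto).
    assert (0 <= 3 * W0x * Cy) by (apply Rmult_le_pos; [lra| auto]).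
    assert (Cx * X * W0y = (Cx * W0y) * X) by ring.
    assert (3 * (Cy * Y) * W0x = (3 * W0x * Cy) * Y) by ring.
    assert ((Cx * W0y) * X <= (Cx * W0y + 3 * W0x * Cy) * X) by (apply Rmult_le_compat_r; lra).
    assert ((3 * W0x * Cy) * Y <= (Cx * W0y + 3 * W0x * Cy) * Y) by (apply Rmult_le_compat_r; lra).
    assert (0 <= (Cx * W0y + 3 * W0x * Cy) * (Rpower hx (5 - g) + Rpower hy (5 - g))) by (apply Rmult_le_pos; lra).
    replace ((Cx * W0y + 3 * W0x * Cy) * (X + Y + Rpower hx (5 - g) + Rpower hy (5 - g))) with
      ((Cx * W0y + 3 * W0x * Cy) * X + (Cx * W0y + 3 * W0x * Cy) * Y + (Cx * W0y + 3 * W0x * Cy) * (Rpower hx (5 - g) + Rpower hy (5 - g))) by ring.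
    lra.
Qed.
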